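(* Let $R_s>0$, $\lambda=2^{R_s}$, and let $\gamma_d,\gamma_e$ be independent, where $\gamma_d$ is generalized-$K$ distributed with $k_d=m_d=1$ and mean $\overline\gamma_d>0$ (CDF $F_{\gamma_d}(x)=G_{1,3}^{2,1}\!\left(\frac{x}{\overline\gamma_d}\,\middle|\,{1\atop 1,1,0}\right)$), and $\gamma_e$ is generalized-$K$ distributed with parameters $k_e>0,m_e>0$ and mean $\overline\gamma_e>0$. Let $\sigma_e^2$ be the variance of $\gamma_e$, $P(x)=F_{\gamma_d}(\lambda-1+\lambda x)$, $\widetilde P_{\rm sop}(\overline\gamma_d):=P(\overline\gamma_e)+\frac{\sigma_e^2}{2}P''(\overline\gamma_e)$, and $a=\lambda-1+\lambda\overline\gamma_e$. Then, as $\overline\gamma_d\to\infty$ with all other parameters fixed, $$\widetilde P_{\rm sop}(\overline\gamma_d)=\overline\gamma_d^{-1}\left(\frac{\psi(1)+\psi(2)-\ln\frac{a}{\overline\gamma_d}}{a^{-1}}-\frac{\overline\gamma_e^2\lambda^2\left(\frac{(k_e+1)(m_e+1)}{k_em_e}-1\right)}{2a}\right)+o(\overline\gamma_d^{-1}).$$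
   Context: $\psi$ is the digamma function and $G^{m,n}_{p,q}$ the standard Meijer G-function. The generalized-$K$ distribution with parameters $k,m$ and mean $\overline\gamma$ is that of $\overline\gamma XY$ with $X,Y$ independent unit-mean Gamma variables of shapes $k$ and $m$ (for $k=m=1$ this is the $K$-distribution). $\widetilde P_{\rm sop}$ is the second-order Taylor approximation of the secrecy outage probability $\mathbb{E}\{F_{\gamma_d}(\lambda-1+\lambda\gamma_e)\}$ around the mean of $\gamma_e$. *)

(* Defs.v *)
From Stdlib Require Import Reals.
From Coquelicot Require Import Coquelicot.
Open Scope R_scope.

Definition Gamma_fun (s : R) : R :=
  RInt_gen (fun t => Rpower t (s - 1) * exp (- t)) (at_right 0) (Rbar_locally p_infty).

Definition digamma (s : R) : R := Derive Gamma_fun s / Gamma_fun s.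

Definition gamma_pdf (k x : R) : R :=
  Rpower k k * Rpower x (k - 1) * exp (- (k * x)) / Gamma_fun k.

(* Variance of the generalized-K variable gbar * X * Y, X ~ Gamma(k), Y ~ Gamma(m)
   independent unit-mean: E[(gbar X Y)^2] - (E[gbar X Y])^2, with mean gbar. *)
Definition genK_variance (k m gbar : R) : R :=
  RInt_gen (fun x =>
      RInt_gen (fun y => (gbar * x * y) ^ 2 * gamma_pdf k x * gamma_pdf m y)
               (at_right 0) (Rbar_locally p_infty))
    (at_right 0) (Rbar_locally p_infty)
  - gbar ^ 2.

(* CDF of the K-distribution (k = m = 1) with mean gbar, for x >= 0:
   P(gbar X Y <= x) = int_0^oo e^(-t) (1 - e^(-x/(gbar t))) dt,
   X, Y independent unit-mean exponentials.  This equals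
   G^{2,1}_{1,3}(x/gbar | 1 ; 1,1,0). *)
Definition genK11_cdf (gbar x : R) : R :=
  RInt_gen (fun t => exp (- t) * (1 - exp (- (x / (gbar * t)))))
    (at_right 0) (Rbar_locally p_infty).

(* Main.v *)
Require Import Defs.
From Stdlib Require Import Reals Lra Psatz FunctionalExtensionality.
From Coquelicot Require Import Coquelicot.
Open Scope R_scope.

Notation IG f l := (is_RInt_gen f (at_right 0) (Rbar_locally p_infty) l).

Lemma ballR x e y : ball x e y <-> Rabs (y - x) < e.
Proof. unfold ball; simpl; unfold AbsRing_ball, abs, minus, plus, opp; simpl. tauto. Qed.

Lemma ballR1 x e y : ball x e y -> Rabs (y - x) < e.
Proof. apply ballR. Qed.
Lemma ballR2 x e y : Rabs (y - x) < e -> ball x e y.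
Proof. apply ballR. Qed.

Lemma F0_ev (d : R) : 0 < d -> at_right 0 (fun x => 0 < x < d).
Proof.
  intros Hd. exists (mkposreal d Hd). intros y Hy Hpos.
  apply ballR1 in Hy. simpl in Hy. change (Rabs (y - 0) < d) in Hy. rewrite Rminus_0_r in Hy.
  apply Rabs_def2 in Hy. lra.
Qed.

Lemma Fi_ev N : Rbar_locally p_infty (fun x => N < x).
Proof. exists N; auto. Qed.

Lemma prod_ev : filter_prod (at_right 0) (Rbar_locally p_infty)
  (fun ab => 0 < fst ab < 1 /\ 1 < snd ab).
Proof.
  apply (Filter_prod _ _ _ (fun x => 0 < x < 1) (fun x => 1 < x)).
  apply F0_ev; lra. apply Fi_ev. intros; simpl; tauto.
Qed.

Definition Mbound (f M : R -> R) := forall a b, 0 < a -> a <= b ->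
  ex_RInt f a b /\ Rabs (RInt f a b) <= M b - M a.
Definition Mlim (M : R -> R) := exists m0 mi : R,
  filterlim M (at_right 0) (locally m0) /\ filterlim M (Rbar_locally p_infty) (locally mi).

Lemma Mbound_ex (f M : R -> R) : Mbound f M -> forall x y, 0 < x -> 0 < y ->
  ex_RInt f x y /\ Rabs (RInt f x y) <= Rabs (M y - M x).
Proof.
  intros HB x y Hx Hy. destruct (Rle_lt_dec x y) as [H|H].
  - destruct (HB x y Hx H) as [H1 H2]. split; auto.
    eapply Rle_trans; [exact H2|]. apply Rle_abs.
  - destruct (HB y x Hy (Rlt_le _ _ H)) as [H1 H2]. split.
    apply ex_RInt_swap; auto.
    rewrite <- opp_RInt_swap by auto. unfold opp; simpl.
    rewrite Rabs_Ropp. eapply Rle_trans; [exact H2|].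
    rewrite <- Rabs_Ropp. replace (- (M y - M x)) with (M x - M y) by ring. apply Rle_abs.
Qed.

Lemma Mbound_IG (f M : R -> R) : Mbound f M -> Mlim M -> exists l, IG f l.
Proof.
  intros HB [m0 [mi [H0 Hi]]].
  assert (Hc : exists l, filterlim (fun ab => RInt f (fst ab) (snd ab))
             (filter_prod (at_right 0) (Rbar_locally p_infty)) (locally l)).
  { apply (filterlim_locally_cauchy (U := R_CompleteSpace)).
    intros eps.
    assert (He : 0 < eps / 4) by (destruct eps; simpl; lra).
    pose proof (proj1 (filterlim_locally _ _) H0 (mkposreal _ He)) as A0.
    pose proof (proj1 (filterlim_locally _ _) Hi (mkposreal _ He)) as Ai.
    simpl in A0, Ai.
    exists (fun ab => (0 < fst ab < 1 /\ Rabs (M (fst ab) - m0) < eps/4) /\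
                   (1 < snd ab /\ Rabs (M (snd ab) - mi) < eps / 4)).
    split.
    - apply (Filter_prod _ _ _ (fun x => 0 < x < 1 /\ Rabs (M x - m0) < eps/4)
                               (fun x => 1 < x /\ Rabs (M x - mi) < eps/4)).
      + generalize (filter_and _ _ (F0_ev 1 Rlt_0_1) A0).
        apply filter_imp. intros x [Hx Hb]. apply ballR1 in Hb. tauto.
      + generalize (filter_and _ _ (Fi_ev 1) Ai).
        apply filter_imp. intros x [Hx Hb]. apply ballR1 in Hb. tauto.
      + intros; simpl; tauto.
    - intros [a b] [a' b'] [[Ha Ma] [Hb Mb]] [[Ha' Ma'] [Hb' Mb']]. simpl in *.
      apply ballR2.
      assert (E : RInt f a' b' - RInt f a b = RInt f a' a + RInt f b b').
      { destruct (Mbound_ex f M HB a' a) as [E1 _]; try lra.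
        destruct (Mbound_ex f M HB a b) as [E2 _]; try lra.
        destruct (Mbound_ex f M HB b b') as [E3 _]; try lra.
        rewrite <- (RInt_Chasles f a' a b') by (auto; eapply ex_RInt_Chasles; eauto).
        rewrite <- (RInt_Chasles f a b b') by auto.
        unfold plus; simpl. ring. }
      rewrite E.
      destruct (Mbound_ex f M HB a' a) as [_ B1]; try lra.
      destruct (Mbound_ex f M HB b b') as [_ B2]; try lra.
      destruct eps as [e Hep]; simpl in *.
      eapply Rle_lt_trans. apply Rabs_triang.
      assert (Rabs (M a - M a') < e/2).
      { replace (M a - M a') with ((M a - m0) - (M a' - m0)) by ring.
        eapply Rle_lt_trans. apply Rabs_triang. rewrite Rabs_Ropp. lra. }
      assert (Rabs (M b' - M b) < e/2).
      { replace (M b' - M b) with ((M b' - mi) - (M b - mi)) by ring.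
        eapply Rle_lt_trans. apply Rabs_triang. rewrite Rabs_Ropp. lra. }
      lra. }
  destruct Hc as [l Hl]. exists l.
  apply (filterlimi_lim_ext_loc (fun ab => RInt f (fst ab) (snd ab))); [|exact Hl].
  generalize prod_ev. apply filter_imp. intros [a b] [Ha Hb]; simpl in *.
  exact (RInt_correct f a b (proj1 (HB a b ltac:(lra) ltac:(lra)))).
Qed.

Lemma normR (x : R) : norm x = Rabs x.
Proof. reflexivity. Qed.

Lemma RInt_bound_deriv (f m Mf : R -> R) (a b : R) : a <= b ->
  (forall x, a <= x <= b -> continuous f x /\ continuous m x /\
      is_derive Mf x (m x) /\ Rabs (f x) <= m x) ->
  ex_RInt f a b /\ Rabs (RInt f a b) <= Mf b - Mf a.
Proof.
  intros Hab H.
  assert (Ef : ex_RInt f a b).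
  { apply (ex_RInt_continuous (V:=R_CompleteNormedModule)). intros z Hz. rewrite Rmin_left, Rmax_right in Hz by auto.
    apply H; auto. }
  split; auto.
  assert (Im : is_RInt m a b (minus (Mf b) (Mf a))).
  { apply (is_RInt_derive (V:=R_CompleteNormedModule)); intros x Hx; rewrite Rmin_left, Rmax_right in Hx by auto; apply H; auto. }
  rewrite <- normR.
  apply (norm_RInt_le f m a b _ _ Hab); auto.
  - intros x Hx. rewrite normR. apply H; auto.
  - apply (RInt_correct (V:=R_CompleteNormedModule)); auto.
Qed.

Lemma Mbound_deriv (f m Mf : R -> R) :
  (forall x, 0 < x -> continuous f x /\ continuous m x /\
      is_derive Mf x (m x) /\ Rabs (f x) <= m x) -> Mbound f Mf.
Proof.
  intros H a b Ha Hab. apply (RInt_bound_deriv f m Mf); auto.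
  intros x Hx; apply H; lra.
Qed.

Lemma Mbound_dom (f g M : R -> R) : (forall x, 0 < x -> continuous f x /\ Rabs (f x) <= g x) ->
  Mbound g M -> Mbound f M.
Proof.
  intros H HB a b Ha Hab. destruct (HB a b Ha Hab) as [Eg Bg].
  assert (Ef : ex_RInt f a b).
  { apply (ex_RInt_continuous (V:=R_CompleteNormedModule)). intros z Hz. rewrite Rmin_left, Rmax_right in Hz by auto.
    apply H; lra. }
  split; auto.
  eapply Rle_trans; [|exact Bg]. eapply Rle_trans; [|apply Rle_abs].
  rewrite <- normR.
  apply (norm_RInt_le f g a b _ _ Hab).
  - intros x Hx. rewrite normR. apply H; lra.
  - apply (RInt_correct (V:=R_CompleteNormedModule)); auto.
  - apply (RInt_correct (V:=R_CompleteNormedModule)); auto.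
Qed.

Lemma Mbound_plus (f g M1 M2 : R -> R) : Mbound f M1 -> Mbound g M2 ->
  Mbound (fun x => f x + g x) (fun x => M1 x + M2 x).
Proof.
  intros H1 H2 a b Ha Hab. destruct (H1 a b Ha Hab) as [E1 B1].
  destruct (H2 a b Ha Hab) as [E2 B2].
  split. apply (ex_RInt_plus f g); auto.
  rewrite (RInt_plus f g) by auto.
  eapply Rle_trans. apply Rabs_triang. lra.
Qed.

Lemma Mbound_scal (c : R) (f M : R -> R) : Mbound f M -> Mbound (fun x => c * f x) (fun x => Rabs c * M x).
Proof.
  intros H a b Ha Hab. destruct (H a b Ha Hab) as [E B].
  split. apply (ex_RInt_scal f a b c); auto.
  assert (E2: RInt (fun x => c * f x) a b = c * RInt f a b) by (apply (RInt_scal f a b c); auto).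
  rewrite E2.
  rewrite Rabs_mult. replace (Rabs c * M b - Rabs c * M a) with (Rabs c * (M b - M a)) by ring.
  apply Rmult_le_compat_l; auto. apply Rabs_pos.
Qed.

Lemma Mbound_piece (f m1 m2 M1 M2 : R -> R) :
  (forall x, 0 < x -> continuous f x) ->
  (forall x, 0 < x <= 1 -> continuous m1 x /\ is_derive M1 x (m1 x) /\ Rabs (f x) <= m1 x) ->
  (forall x, 1 <= x -> continuous m2 x /\ is_derive M2 x (m2 x) /\ Rabs (f x) <= m2 x) ->
  Mbound f (fun x => if Rle_dec x 1 then M1 x - M1 1 else M2 x - M2 1).
Proof.
  intros Hc H1 H2 a b Ha Hab.
  assert (P1 : forall a b, 0 < a -> a <= b -> b <= 1 ->
     ex_RInt f a b /\ Rabs (RInt f a b) <= M1 b - M1 a).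
  { intros a' b' Ha' Hab' Hb'. apply (RInt_bound_deriv f m1 M1); auto. intros x Hx.
    split. apply Hc; lra. apply H1; lra. }
  assert (P2 : forall a b, 1 <= a -> a <= b ->
     ex_RInt f a b /\ Rabs (RInt f a b) <= M2 b - M2 a).
  { intros a' b' Ha' Hab'. apply (RInt_bound_deriv f m2 M2); auto. intros x Hx.
    split. apply Hc; lra. apply H2; lra. }
  destruct (Rle_dec b 1) as [Hb|Hb]; destruct (Rle_dec a 1) as [Ha1|Ha1]; try lra.
  - destruct (P1 a b) as [E B]; auto. split; auto. lra.
  - destruct (P1 a 1) as [E1 B1]; auto. lra.
    destruct (P2 1 b) as [E2 B2]; auto. lra. lra.
    split. eapply ex_RInt_Chasles; eauto.
    rewrite <- (RInt_Chasles f a 1 b) by auto. unfold plus; simpl.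
    eapply Rle_trans. apply Rabs_triang. lra.
  - destruct (P2 a b) as [E B]; auto. lra. split; auto. lra.
Qed.

Lemma Mlim_piece (M1 M2 : R -> R) m0 mi :
  filterlim M1 (at_right 0) (locally m0) -> filterlim M2 (Rbar_locally p_infty) (locally mi) ->
  Mlim (fun x => if Rle_dec x 1 then M1 x - M1 1 else M2 x - M2 1).
Proof.
  intros H1 H2. exists (m0 - M1 1), (mi - M2 1). split.
  - apply filterlim_locally. intros eps. 
    generalize (filter_and _ _ (F0_ev 1 Rlt_0_1) (proj1 (filterlim_locally _ _) H1 eps)).
    apply filter_imp. intros x [Hx Hb]. apply ballR1 in Hb. apply ballR2.
    destruct (Rle_dec x 1); [|lra]. replace (M1 x - M1 1 - (m0 - M1 1)) with (M1 x - m0) by ring. auto.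
  - apply filterlim_locally. intros eps. 
    generalize (filter_and _ _ (Fi_ev 1) (proj1 (filterlim_locally _ _) H2 eps)).
    apply filter_imp. intros x [Hx Hb]. apply ballR1 in Hb. apply ballR2.
    destruct (Rle_dec x 1); [lra|]. replace (M2 x - M2 1 - (mi - M2 1)) with (M2 x - mi) by ring. auto.
Qed.

Lemma Mlim_plus (M1 M2 : R -> R) : Mlim M1 -> Mlim M2 -> Mlim (fun x => M1 x + M2 x).
Proof.
  intros [a0 [ai [A0 Ai]]] [b0 [bi [B0 Bi]]]. exists (a0 + b0), (ai + bi).
  split; apply filterlim_locally; intros eps;
  assert (He : 0 < eps / 2) by (destruct eps; simpl; lra).
  - generalize (filter_and _ _ (proj1 (filterlim_locally _ _) A0 (mkposreal _ He))
                              (proj1 (filterlim_locally _ _) B0 (mkposreal _ He))).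
    apply filter_imp. intros x [H1 H2]. apply ballR1 in H1. apply ballR1 in H2. apply ballR2.
    simpl in H1, H2 |- *. replace (M1 x + M2 x - (a0 + b0)) with ((M1 x - a0) + (M2 x - b0)) by ring.
    eapply Rle_lt_trans. apply Rabs_triang. lra.
  - generalize (filter_and _ _ (proj1 (filterlim_locally _ _) Ai (mkposreal _ He))
                              (proj1 (filterlim_locally _ _) Bi (mkposreal _ He))).
    apply filter_imp. intros x [H1 H2]. apply ballR1 in H1. apply ballR1 in H2. apply ballR2.
    simpl in H1, H2 |- *. replace (M1 x + M2 x - (ai + bi)) with ((M1 x - ai) + (M2 x - bi)) by ring.
    eapply Rle_lt_trans. apply Rabs_triang. lra.
Qed.

Lemma Mlim_scal (c : R) (M : R -> R) : Mlim M -> Mlim (fun x => c * M x).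
Proof.
  intros [a0 [ai [A0 Ai]]]. exists (c * a0), (c * ai).
  split; apply filterlim_locally; intros eps;
  assert (He : 0 < eps / (Rabs c + 1)) by (destruct eps; simpl; apply Rdiv_lt_0_compat; [lra|pose proof (Rabs_pos c); lra]).
  - generalize (proj1 (filterlim_locally _ _) A0 (mkposreal _ He)).
    apply filter_imp. intros x H1. apply ballR1 in H1. apply ballR2. simpl in *.
    replace (c * M x - c * a0) with (c * (M x - a0)) by ring. rewrite Rabs_mult.
    pose proof (Rabs_pos c). pose proof (Rabs_pos (M x - a0)).
    apply Rle_lt_trans with ((Rabs c + 1) * Rabs (M x - a0)). nra.
    destruct eps as [e He']; simpl in *.
    apply (Rmult_lt_compat_l (Rabs c + 1)) in H1; [|lra].
    replace ((Rabs c + 1) * (e / (Rabs c + 1))) with e in H1 by (field; lra). auto.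
  - generalize (proj1 (filterlim_locally _ _) Ai (mkposreal _ He)).
    apply filter_imp. intros x H1. apply ballR1 in H1. apply ballR2. simpl in *.
    replace (c * M x - c * ai) with (c * (M x - ai)) by ring. rewrite Rabs_mult.
    pose proof (Rabs_pos c). pose proof (Rabs_pos (M x - ai)).
    apply Rle_lt_trans with ((Rabs c + 1) * Rabs (M x - ai)). nra.
    destruct eps as [e He']; simpl in *.
    apply (Rmult_lt_compat_l (Rabs c + 1)) in H1; [|lra].
    replace ((Rabs c + 1) * (e / (Rabs c + 1))) with e in H1 by (field; lra). auto.
Qed.

Lemma IG_deriv (f F : R -> R) (Fa Fb : R) :
  (forall x, 0 < x -> is_derive F x (f x) /\ continuous f x) ->
  filterlim F (at_right 0) (locally Fa) -> filterlim F (Rbar_locally p_infty) (locally Fb) ->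
  IG f (Fb - Fa).
Proof.
  intros H HA HB.
  apply (filterlimi_lim_ext_loc (fun ab => F (snd ab) - F (fst ab))).
  - generalize prod_ev. apply filter_imp. intros [a b] [Ha Hb]; simpl in *.
    apply (is_RInt_derive F f a b); intros x Hx;
      rewrite Rmin_left, Rmax_right in Hx by lra; apply H; lra.
  - apply filterlim_locally. intros eps.
    assert (He : 0 < eps / 2) by (destruct eps; simpl; lra).
    apply (Filter_prod _ _ _ (fun x => ball Fa (eps/2) (F x)) (fun x => ball Fb (eps/2) (F x))).
    + apply (proj1 (filterlim_locally _ _) HA (mkposreal _ He)).
    + apply (proj1 (filterlim_locally _ _) HB (mkposreal _ He)).
    + intros x y H1 H2. apply ballR1 in H1. apply ballR1 in H2. apply ballR2. simpl in *.
      replace (F y - F x - (Fb - Fa)) with ((F y - Fb) - (F x - Fa)) by ring.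
      eapply Rle_lt_trans. apply Rabs_triang. rewrite Rabs_Ropp. lra.
Qed.

Lemma IG_ext (f g : R -> R) (l : R) : (forall x, 0 < x -> f x = g x) -> IG f l -> IG g l.
Proof.
  intros H. apply is_RInt_gen_ext.
  generalize prod_ev. apply filter_imp. intros [a b] [Ha Hb] x Hx; simpl in *.
  rewrite Rmin_left, Rmax_right in Hx by lra. apply H; lra.
Qed.

Lemma IG_RInt_gen (f : R -> R) (l : R) : IG f l -> RInt_gen f (at_right 0) (Rbar_locally p_infty) = l.
Proof. intros H. apply (is_RInt_gen_unique (V:=R_CompleteNormedModule)); auto. Qed.

Lemma IG_plus (f g : R -> R) (lf lg : R) : IG f lf -> IG g lg -> IG (fun x => f x + g x) (lf + lg).
Proof. intros H1 H2. apply (is_RInt_gen_plus (V:=R_NormedModule) f g lf lg H1 H2). Qed.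

Lemma IG_minus (f g : R -> R) (lf lg : R) : IG f lf -> IG g lg -> IG (fun x => f x - g x) (lf - lg).
Proof. intros H1 H2. apply (is_RInt_gen_minus (V:=R_NormedModule) f g lf lg H1 H2). Qed.

Lemma IG_scal (c : R) (f : R -> R) (lf : R) : IG f lf -> IG (fun x => c * f x) (c * lf).
Proof. intros H1. apply (is_RInt_gen_scal (V:=R_NormedModule) f c lf H1). Qed.

Lemma IG_norm (f g : R -> R) (lf lg : R) : (forall x, 0 < x -> Rabs (f x) <= g x) -> IG f lf -> IG g lg ->
  Rabs lf <= lg.
Proof.
  intros H H1 H2. rewrite <- normR.
  apply (RInt_gen_norm (V:=R_CompleteNormedModule) (Fa := at_right 0) (Fb := Rbar_locally p_infty) f g lf lg); auto.
  - generalize prod_ev. apply filter_imp. intros [a b] [Ha Hb]; simpl in *; lra.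
  - generalize prod_ev. apply filter_imp. intros [a b] [Ha Hb] x Hx; simpl in *.
    rewrite normR; apply H; lra.
Qed.

Lemma IG_zero : IG (fun _ => 0) 0.
Proof.
  replace 0 with (0 - 0) at 2 by ring.
  apply (IG_deriv (fun _ => 0) (fun _ => 0)).
  - intros; split. apply is_derive_Reals, derivable_pt_lim_const. apply continuous_const.
  - apply filterlim_const. - apply filterlim_const.
Qed.

Lemma IG_le (f g : R -> R) (lf lg : R) : (forall x, 0 < x -> f x <= g x) -> IG f lf -> IG g lg -> lf <= lg.
Proof.
  intros H H1 H2.
  assert (Rabs 0 <= lg - lf).
  { apply (IG_norm (fun x => 0) (fun x => g x - f x)); auto.
    intros; rewrite Rabs_R0; specialize (H x H0); lra.
    apply IG_zero. apply IG_minus; auto. }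
  pose proof (Rabs_pos 0); lra.
Qed.

Lemma ex_IG (f M : R -> R) : Mbound f M -> Mlim M -> IG f (RInt_gen f (at_right 0) (Rbar_locally p_infty)).
Proof.
  intros H1 H2. destruct (Mbound_IG f M H1 H2) as [l Hl]. rewrite (IG_RInt_gen f l Hl). auto.
Qed.

Lemma filterlimi_mono {T U : Type} (F : (T -> Prop) -> Prop) (G : (U -> Prop) -> Prop)
  (g1 g2 : T -> U -> Prop) : Filter F ->
  F (fun x => forall y, g1 x y -> g2 x y) -> filterlimi g1 F G -> filterlimi g2 F G.
Proof.
  intros FF Hm H P HP. specialize (H P HP). unfold filtermapi in *.
  generalize (filter_and _ _ Hm H). apply filter_imp.
  intros x [H1 [y [H2 H3]]]. exists y; auto.
Qed.

Lemma lim_scale_F0 c : 0 < c -> filterlim (fun x => c * x) (at_right 0) (at_right 0).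
Proof.
  intros Hc P [d Hd]. exists (mkposreal (d / c) (Rdiv_lt_0_compat _ _ (cond_pos d) Hc)).
  intros y Hy Hp. apply Hd.
  - apply ballR2. apply ballR1 in Hy. simpl in *.
    change (Rabs (y - 0) < d / c) in Hy. change (Rabs (c * y - 0) < d).
    rewrite Rminus_0_r in *. rewrite Rabs_mult, (Rabs_right c) by lra.
    apply (Rmult_lt_compat_l c) in Hy; auto. replace (c * (d / c)) with (pos d) in Hy by (field; lra). auto.
  - nra.
Qed.

Lemma lim_scale_Fi c : 0 < c -> filterlim (fun x => c * x) (Rbar_locally p_infty) (Rbar_locally p_infty).
Proof.
  intros Hc P [N HN]. exists (N / c). intros x Hx. apply HN.
  apply (Rmult_lt_compat_l c) in Hx; auto. replace (c * (N / c)) with N in Hx by (field; lra). auto.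
Qed.

Lemma lim_inv_F0 w : 0 < w -> filterlim (fun x => w / x) (at_right 0) (Rbar_locally p_infty).
Proof.
  intros Hw P [N HN]. 
  set (N' := Rmax N 1).
  assert (HN' : 0 < N') by (unfold N'; pose proof (Rmax_r N 1); lra).
  exists (mkposreal (w / N') (Rdiv_lt_0_compat _ _ Hw HN')).
  intros y Hy Hp. apply HN. apply ballR1 in Hy. simpl in Hy.
  change (Rabs (y - 0) < w / N') in Hy. rewrite Rminus_0_r, Rabs_right in Hy by lra.
  assert (N' < w / y).
  { apply (Rmult_lt_reg_r y); auto. unfold Rdiv; rewrite Rmult_assoc, Rinv_l, Rmult_1_r by lra.
    apply (Rmult_lt_compat_l N') in Hy; auto.
    replace (N' * (w / N')) with w in Hy by (field; lra). lra. }
  pose proof (Rmax_l N 1). fold N' in H0. lra.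
Qed.

Lemma lim_inv_Fi w : 0 < w -> filterlim (fun x => w / x) (Rbar_locally p_infty) (at_right 0).
Proof.
  intros Hw P [d Hd]. exists (w / d). intros x Hx. 
  assert (Hx0 : 0 < x) by (pose proof (Rdiv_lt_0_compat _ _ Hw (cond_pos d)); lra).
  apply Hd.
  - apply ballR2. change (Rabs (w / x - 0) < d). rewrite Rminus_0_r, Rabs_right.
    + apply (Rmult_lt_reg_r x); auto. unfold Rdiv; rewrite Rmult_assoc, Rinv_l, Rmult_1_r by lra.
      apply (Rmult_lt_compat_l d) in Hx; [|apply cond_pos].
      replace (d * (w / d)) with w in Hx by (pose proof (cond_pos d); field; lra). lra.
    + apply Rle_ge, Rlt_le, Rdiv_lt_0_compat; auto.
  - apply Rdiv_lt_0_compat; auto.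
Qed.

Lemma IG_scale (f : R -> R) (l c : R) : 0 < c -> IG f l -> IG (fun y => f (c * y)) (l / c).
Proof.
  intros Hc H.
  assert (H1 : IG (fun x => f x / c) (l / c)).
  { apply (IG_ext (fun x => / c * f x)). intros; unfold Rdiv; ring.
    unfold Rdiv; rewrite Rmult_comm. apply IG_scal; auto. }
  assert (H2 : filterlim (fun ab : R * R => (c * fst ab, c * snd ab))
     (filter_prod (at_right 0) (Rbar_locally p_infty)) (filter_prod (at_right 0) (Rbar_locally p_infty))).
  { apply filterlim_pair.
    - eapply filterlim_comp. apply filterlim_fst. apply lim_scale_F0; auto.
    - eapply filterlim_comp. apply filterlim_snd. apply lim_scale_Fi; auto. }
  pose proof (filterlimi_comp _ _ _ _ _ _ _ _ H2 H1) as H3. simpl in H3.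
  unfold is_RInt_gen.
  eapply filterlimi_mono; [| |exact H3]. apply filter_prod_filter; apply _.
  apply filter_forall. intros [a b] v Hv. simpl in *.
  assert (Hv' : is_RInt (fun x => f x / c) (c * a + 0) (c * b + 0) v) by (rewrite !Rplus_0_r; auto).
  pose proof (is_RInt_comp_lin _ c 0 a b v Hv') as H4.
  eapply is_RInt_ext; [|exact H4]. intros x _. simpl. unfold scal; simpl; unfold mult; simpl.
  rewrite Rplus_0_r. field. lra.
Qed.

Lemma IG_inv (f : R -> R) (l w : R) : 0 < w -> (forall x, 0 < x -> continuous f x) ->
  IG f l -> IG (fun u => w / u ^ 2 * f (w / u)) l.
Proof.
  intros Hw Hc H.
  assert (H2 : filterlim (fun ab : R * R => (w / snd ab, w / fst ab))
     (filter_prod (at_right 0) (Rbar_locally p_infty)) (filter_prod (at_right 0) (Rbar_locally p_infty))).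
  { apply filterlim_pair.
    - eapply filterlim_comp. apply filterlim_snd. apply lim_inv_Fi; auto.
    - eapply filterlim_comp. apply filterlim_fst. apply lim_inv_F0; auto. }
  pose proof (filterlimi_comp _ _ _ _ _ _ _ _ H2 H) as H3. simpl in H3.
  unfold is_RInt_gen.
  eapply filterlimi_mono; [| |exact H3]. apply filter_prod_filter; apply _.
  generalize prod_ev. apply filter_imp. intros [a b] [Ha Hb] v Hv. simpl in *.
  assert (Hcomp := is_RInt_comp f (fun u => w / u) (fun u => - (w / u ^ 2)) a b).
  rewrite Rmin_left, Rmax_right in Hcomp by lra.
  assert (E : RInt f (w / a) (w / b) = - v).
  { rewrite <- (opp_RInt_swap f (w / b) (w / a)).
    rewrite (is_RInt_unique f (w / b) (w / a) v Hv). reflexivity.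
    exists v; auto. }
  rewrite E in Hcomp.
  assert (H5 : is_RInt (fun y => scal (- (w / y ^ 2)) (f (w / y))) a b (- v)).
  { apply Hcomp.
    - intros x Hx. apply Hc. apply Rdiv_lt_0_compat; lra.
    - intros x Hx. split.
      + auto_derive. lra. field. lra.
      + apply (ex_derive_continuous (fun u => - (w / u ^ 2))). auto_derive. intro; nra. }
  apply is_RInt_opp in H5. unfold opp in H5; simpl in H5. rewrite Ropp_involutive in H5.
  eapply is_RInt_ext; [|exact H5]. intros x _. unfold scal; simpl; unfold mult; simpl. ring.
Qed.

Lemma lim0_squeeze {T} (F : (T -> Prop) -> Prop) {FF : Filter F} (f g : T -> R) :
  F (fun x => Rabs (f x) <= g x) -> filterlim g F (locally 0) -> filterlim f F (locally 0).
Proof.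
  intros H1 H2. apply filterlim_locally. intros eps.
  generalize (filter_and _ _ H1 (proj1 (filterlim_locally _ _) H2 eps)). apply filter_imp.
  intros x [A B]. apply ballR1 in B. apply ballR2. simpl in *.
  change (Rabs (f x - 0) < eps). change (Rabs (g x - 0) < eps) in B.
  rewrite Rminus_0_r in *. pose proof (Rle_abs (g x)). lra.
Qed.

Definition Integ (f : R -> R) := exists M, Mbound f M /\ Mlim M.

Lemma Integ_IG f : Integ f -> IG f (RInt_gen f (at_right 0) (Rbar_locally p_infty)).
Proof. intros [M [H1 H2]]. apply (ex_IG f M); auto. Qed.

Lemma Integ_plus f g : Integ f -> Integ g -> Integ (fun x => f x + g x).
Proof.
  intros [M1 [A1 B1]] [M2 [A2 B2]]. exists (fun x => M1 x + M2 x).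
  split. apply Mbound_plus; auto. apply Mlim_plus; auto.
Qed.

Lemma Integ_scal c f : Integ f -> Integ (fun x => c * f x).
Proof.
  intros [M1 [A1 B1]]. exists (fun x => Rabs c * M1 x).
  split. apply Mbound_scal; auto. apply Mlim_scal; auto.
Qed.

Lemma Integ_dom f g : (forall x, 0 < x -> continuous f x /\ Rabs (f x) <= g x) ->
  Integ g -> Integ f.
Proof.
  intros H [M [A1 B1]]. exists M. split; auto. apply (Mbound_dom f g M); auto.
Qed.

Lemma ln_le_sub1 u : 0 < u -> ln u <= u - 1.
Proof. intros Hu. pose proof (exp_ineq1_le (ln u)). rewrite exp_ln in H; lra. Qed.

Lemma x_le_exp x : x <= exp x.
Proof. pose proof (exp_ineq1_le x). lra. Qed.

Lemma xexp1 x : 0 <= x -> x * exp (- x) <= 1.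
Proof.
  intros Hx. pose proof (x_le_exp x). pose proof (exp_pos x).
  rewrite exp_Ropp. apply (Rmult_le_reg_r (exp x)); auto.
  rewrite Rmult_assoc, Rinv_l by lra. lra.
Qed.

Lemma xexp2 x : 0 <= x -> x ^ 2 * exp (- x) <= 4.
Proof.
  intros Hx. pose proof (x_le_exp (x/2)). pose proof (exp_pos (x/2)).
  assert (E : exp x = exp (x/2) * exp (x/2)) by (rewrite <- exp_plus; f_equal; field).
  assert (x ^ 2 <= 4 * exp x).
  { rewrite E. replace (x ^ 2) with (4 * ((x/2) * (x/2))) by field.
    apply Rmult_le_compat_l; [lra|]. apply Rmult_le_compat; lra. }
  rewrite exp_Ropp. pose proof (exp_pos x). apply (Rmult_le_reg_r (exp x)); auto.
  rewrite Rmult_assoc, Rinv_l by lra. lra.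
Qed.

Lemma xexp3 x : 0 <= x -> x ^ 3 * exp (- x) <= 27.
Proof.
  intros Hx. pose proof (x_le_exp (x/3)). pose proof (exp_pos (x/3)).
  assert (E : exp x = exp (x/3) * exp (x/3) * exp (x/3)) by (rewrite <- !exp_plus; f_equal; field).
  assert (x ^ 3 <= 27 * exp x).
  { rewrite E. replace (x ^ 3) with (27 * ((x/3) * (x/3) * (x/3))) by field.
    apply Rmult_le_compat_l; [lra|]. apply Rmult_le_compat; try nra.
    all: try (apply Rmult_le_compat; lra). }
  rewrite exp_Ropp. pose proof (exp_pos x). apply (Rmult_le_reg_r (exp x)); auto.
  rewrite Rmult_assoc, Rinv_l by lra. lra.
Qed.

Lemma exp_le_exp x y : x <= y -> exp x <= exp y.
Proof. intros [H|H]. left; apply exp_increasing; auto. subst; lra. Qed.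

Lemma exp_taylor x : Rabs (exp x - 1 - x) <= x ^ 2 * exp (Rabs x).
Proof.
  destruct (Req_dec x 0) as [->|Hx].
  { rewrite exp_0. replace (1 - 1 - 0) with 0 by ring. rewrite Rabs_R0. simpl.
    pose proof (exp_pos (Rabs 0)). nra. }
  destruct (MVT_cor4 (fun y => exp y - y) (fun y => exp y - 1) 0 (Rabs x)) with (b := x)
    as [c [Hc1 Hc2]].
  { intros c _. auto_derive; auto. ring. }
  { rewrite Rminus_0_r; lra. }
  rewrite exp_0 in Hc1. rewrite !Rminus_0_r in *.
  replace (exp x - 1 - x) with (exp x - x - 1) by ring. rewrite Hc1.
  destruct (MVT_cor4 exp exp 0 (Rabs c)) with (b := c) as [d [Hd1 Hd2]].
  { intros d _. apply is_derive_Reals, derivable_pt_lim_exp. }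
  { rewrite Rminus_0_r; lra. }
  rewrite exp_0, !Rminus_0_r in *. rewrite Hd1.
  rewrite !Rabs_mult.
  assert (exp d <= exp (Rabs x)).
  { apply exp_le_exp. pose proof (Rle_abs d). lra. }
  rewrite (Rabs_right (exp d)) by (left; apply exp_pos).
  replace (x ^ 2) with (Rabs x * Rabs x) by (rewrite <- Rabs_mult; rewrite Rabs_right; [ring|nra]).
  pose proof (Rabs_pos c). pose proof (Rabs_pos x). pose proof (exp_pos d).
  assert (exp d * Rabs c <= exp (Rabs x) * Rabs x) by (apply Rmult_le_compat; lra).
  nra.
Qed.

Lemma Rpower_pos x y : 0 < Rpower x y.
Proof. unfold Rpower; apply exp_pos. Qed.

Lemma is_derive_Rpower x y : 0 < x -> is_derive (fun t => Rpower t y) x (y * Rpower x (y - 1)).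
Proof. intros; apply is_derive_Reals, derivable_pt_lim_power; auto. Qed.

Lemma cont_Rpower_exp p c x : 0 < x -> continuous (fun t => Rpower t p * exp (- (c * t))) x.
Proof.
  intros Hx. apply (ex_derive_continuous (fun t => Rpower t p * exp (- (c * t)))).
  unfold Rpower. auto_derive. auto.
Qed.

Lemma lim_rpow0 s : 0 < s -> filterlim (fun t => Rpower t s) (at_right 0) (locally 0).
Proof.
  intros Hs. apply filterlim_locally. intros eps.
  pose proof (Rpower_pos eps (/ s)) as Hd.
  generalize (F0_ev (Rpower eps (/ s)) Hd). apply filter_imp. intros x Hx.
  apply ballR2. change (Rabs (Rpower x s - 0) < eps). rewrite Rminus_0_r.
  rewrite Rabs_right by (left; apply Rpower_pos).
  replace (pos eps) with (Rpower (Rpower eps (/ s)) s).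
  apply Rlt_Rpower_l; auto. 
  rewrite Rpower_mult. replace (/ s * s) with 1 by (field; lra). apply Rpower_1. apply cond_pos.
Qed.

Lemma lim_expinf c : 0 < c -> filterlim (fun t => exp (- (c * t))) (Rbar_locally p_infty) (locally 0).
Proof.
  intros Hc. apply filterlim_locally. intros eps.
  exists (- ln eps / c). intros x Hx.
  apply ballR2. change (Rabs (exp (- (c * x)) - 0) < eps). rewrite Rminus_0_r.
  rewrite Rabs_right by (left; apply exp_pos).
  rewrite <- (exp_ln eps) by apply cond_pos. apply exp_increasing.
  apply (Rmult_lt_compat_l c) in Hx; auto. replace (c * (- ln eps / c)) with (- ln eps) in Hx by (field; lra).
  lra.
Qed.

Lemma rpow_bound p : exists K, 0 < K /\ forall t, 1 <= t -> Rpower t p <= K * exp (t / 4).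
Proof.
  set (q := Rabs p + 1).
  assert (Hq : 0 < q) by (unfold q; pose proof (Rabs_pos p); lra).
  exists (exp (q * ln (4 * q))). split. apply exp_pos.
  intros t Ht. unfold Rpower. rewrite <- exp_plus. apply exp_le_exp.
  assert (Hl : 0 <= ln t) by (rewrite <- ln_1; destruct Ht as [Ht|Ht]; [left; apply ln_increasing; lra| subst; lra]).
  assert (p * ln t <= q * ln t) by (apply Rmult_le_compat_r; auto; unfold q; pose proof (Rle_abs p); lra).
  assert (E : ln t = ln (4 * q) + ln (t / (4 * q))).
  { rewrite <- ln_mult by (try apply Rdiv_lt_0_compat; lra). f_equal. field. lra. }
  pose proof (ln_le_sub1 (t / (4 * q)) ltac:(apply Rdiv_lt_0_compat; lra)).
  assert (q * ln (t / (4 * q)) <= q * (t / (4 * q) - 1)) by (apply Rmult_le_compat_l; lra).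
  assert (q * (t / (4 * q) - 1) <= t / 4) by (field_simplify; [lra | lra]).
  assert (p * ln t <= q * ln (4*q) + q * ln (t/(4*q))) by (rewrite <- Rmult_plus_distr_l, <- E; auto). lra.
Qed.

Lemma is_derive_eq (f g : R -> R) (x l l' : R) : (forall t, f t = g t) -> l = l' -> is_derive f x l -> is_derive g x l'.
Proof. intros H1 H2 H3. subst. apply (is_derive_ext f g); auto. Qed.

Lemma lim_mulc {T} {F : (T -> Prop) -> Prop} {FF : Filter F} (c : R) (f : T -> R) (a : R) :
  filterlim f F (locally a) -> filterlim (fun x => c * f x) F (locally (c * a)).
Proof.
  intros H. apply filterlim_locally. intros eps.
  assert (He : 0 < eps / (Rabs c + 1)) by (destruct eps; simpl; apply Rdiv_lt_0_compat; [lra|pose proof (Rabs_pos c); lra]).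
  generalize (proj1 (filterlim_locally _ _) H (mkposreal _ He)).
  apply filter_imp. intros x H1. apply ballR1 in H1. apply ballR2. simpl in *.
  replace (c * f x - c * a) with (c * (f x - a)) by ring. rewrite Rabs_mult.
  pose proof (Rabs_pos c). pose proof (Rabs_pos (f x - a)).
  apply Rle_lt_trans with ((Rabs c + 1) * Rabs (f x - a)). nra.
  destruct eps as [e He']; simpl in *.
  apply (Rmult_lt_compat_l (Rabs c + 1)) in H1; [|lra].
  replace ((Rabs c + 1) * (e / (Rabs c + 1))) with e in H1 by (field; lra). auto.
Qed.

Lemma lim_ext {T} {F : (T -> Prop) -> Prop} {FF : Filter F} (f g : T -> R) (a b : R) :
  F (fun x => f x = g x) -> a = b -> filterlim f F (locally a) -> filterlim g F (locally b).
Proof.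
  intros H1 <- H. apply filterlim_locally. intros eps.
  generalize (filter_and _ _ H1 (proj1 (filterlim_locally _ _) H eps)). apply filter_imp.
  intros x [A B]. rewrite <- A; auto.
Qed.

Definition gint (s t : R) := Rpower t (s - 1) * exp (- t).

Lemma gint_cont s x : 0 < x -> continuous (gint s) x.
Proof.
  intros Hx. apply (ex_derive_continuous (gint s)). unfold gint, Rpower. auto_derive. auto.
Qed.

Lemma gint_Integ s : 0 < s -> Integ (gint s).
Proof.
  intros Hs. destruct (rpow_bound (s - 1)) as [K [HK HKb]].
  eexists. split.
  - apply (Mbound_piece (gint s) (fun t => Rpower t (s - 1)) (fun t => K * exp (- (3/4 * t)))
            (fun t => Rpower t s / s) (fun t => - (4/3 * K) * exp (- (3/4 * t)))).
    + apply gint_cont.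
    + intros x Hx. split; [|split].
      * apply (ex_derive_continuous (fun t => Rpower t (s - 1))). unfold Rpower; auto_derive; lra.
      * apply (is_derive_eq (fun t => / s * Rpower t s) _ x (/ s * (s * Rpower x (s - 1)))).
        intros; unfold Rdiv; ring. field; lra.
        apply (is_derive_scal (fun t => Rpower t s)). apply is_derive_Rpower; lra.
      * unfold gint. rewrite Rabs_right. 
        2: { left; apply Rmult_lt_0_compat; [apply Rpower_pos|apply exp_pos]. }
        pose proof (Rpower_pos x (s - 1)).
        assert (exp (- x) <= 1) by (rewrite <- exp_0; apply exp_le_exp; lra). nra.
    + intros x Hx. split; [|split].
      * apply (ex_derive_continuous (fun t => K * exp (- (3/4 * t)))). auto_derive; auto.
      * auto_derive; auto. field.
      * unfold gint. rewrite Rabs_right. 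
        2: { left; apply Rmult_lt_0_compat; [apply Rpower_pos|apply exp_pos]. }
        pose proof (HKb x Hx). pose proof (exp_pos (- x)).
        replace (exp (- (3/4 * x))) with (exp (x / 4) * exp (- x)) by (rewrite <- exp_plus; f_equal; field).
        nra.
  - apply (Mlim_piece (fun t => Rpower t s / s) (fun t => - (4/3 * K) * exp (- (3/4 * t))) 0 0).
    + apply (lim_ext (fun t => / s * Rpower t s) _ (/ s * 0)). apply filter_forall; intros; unfold Rdiv; ring.
      ring. apply lim_mulc. apply lim_rpow0; auto.
    + apply (lim_ext (fun t => - (4/3 * K) * exp (- (3/4 * t))) _ (- (4/3 * K) * 0)). apply filter_forall; intros; ring.
      ring. apply lim_mulc. apply lim_expinf; lra.
Qed.

Lemma IG_unique (f : R -> R) l1 l2 : IG f l1 -> IG f l2 -> l1 = l2.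
Proof. intros H1 H2. rewrite <- (IG_RInt_gen f l1 H1). apply IG_RInt_gen; auto. Qed.

Lemma lim_right_cont (F : R -> R) : continuous F 0 -> filterlim F (at_right 0) (locally (F 0)).
Proof.
  intros H P HP. specialize (H P HP). destruct H as [eps He]. exists eps. intros y Hy _. apply He; auto.
Qed.

Lemma IG_ge_RInt (f : R -> R) l a b : IG f l -> (forall x, 0 < x -> 0 <= f x /\ continuous f x) ->
  0 < a -> a < b -> RInt f a b <= l.
Proof.
  intros H Hf Ha Hab. apply Rnot_lt_le. intros Hl.
  assert (He : 0 < RInt f a b - l) by lra.
  assert (Hex : forall x y, 0 < x -> 0 < y -> ex_RInt f x y).
  { intros x y Hx Hy. apply (ex_RInt_continuous (V:=R_CompleteNormedModule)).
    intros z Hz. apply Hf. pose proof (Rmin_glb_lt x y 0); pose proof (Rmin_l x y); pose proof (Rmin_r x y).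
    destruct (Rle_dec x y); [rewrite Rmin_left in Hz|rewrite Rmin_right in Hz]; lra. }
  specialize (H (ball l (mkposreal _ He)) (locally_ball _ _)).
  destruct H as [Q R HQ HR HQR].
  destruct HQ as [d Hd]. destruct HR as [N HN].
  set (a' := Rmin a d / 2). set (b' := Rmax b N + 1).
  assert (Ha' : 0 < a' < a).
  { unfold a'. pose proof (cond_pos d). pose proof (Rmin_l a d). pose proof (Rmin_r a d).
    destruct (Rle_dec a d); [rewrite Rmin_left|rewrite Rmin_right]; lra. }
  assert (Hb' : b < b' /\ N < b') by (unfold b'; pose proof (Rmax_l b N); pose proof (Rmax_r b N); lra).
  assert (Q a').
  { apply Hd. apply ballR2. change (Rabs (a' - 0) < d). rewrite Rminus_0_r, Rabs_right by lra.
    unfold a'. pose proof (cond_pos d). pose proof (Rmin_r a d). lra. lra. }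
  destruct (HQR a' b' H (HN b' (proj2 Hb'))) as [y [Hy1 Hy2]]. simpl in *.
  apply ballR1 in Hy2. simpl in Hy2.
  rewrite <- (is_RInt_unique f a' b' y Hy1) in Hy2.
  assert (E : RInt f a' b' = RInt f a' a + RInt f a b + RInt f b b').
  { rewrite <- (RInt_Chasles f a' a b'), <- (RInt_Chasles f a b b'). unfold plus; simpl; ring.
    all: apply Hex; lra. }
  assert (0 <= RInt f a' a) by (apply RInt_ge_0; [lra|apply Hex; lra|intros; apply Hf; lra]).
  assert (0 <= RInt f b b') by (apply RInt_ge_0; [lra|apply Hex; lra|intros; apply Hf; lra]).
  pose proof (Rle_abs (RInt f a' b' - l)). lra.
Qed.

Lemma Gamma_IG s : 0 < s -> IG (gint s) (Gamma_fun s).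
Proof. intros Hs. apply (Integ_IG (gint s)), gint_Integ; auto. Qed.

Lemma Gamma_pos s : 0 < s -> 0 < Gamma_fun s.
Proof.
  intros Hs. apply Rlt_le_trans with (RInt (gint s) 1 2).
  - apply RInt_gt_0. lra. intros x Hx. unfold gint. apply Rmult_lt_0_compat; [apply Rpower_pos|apply exp_pos].
    intros; apply gint_cont; lra.
  - apply (IG_ge_RInt (gint s)); try lra. apply Gamma_IG; auto.
    intros x Hx. split. unfold gint; left; apply Rmult_lt_0_compat; [apply Rpower_pos|apply exp_pos].
    apply gint_cont; auto.
Qed.

Lemma IG_exp : IG (fun t => exp (- t)) 1.
Proof.
  replace 1 with (0 - (- exp (- 0))) by (rewrite Ropp_0, exp_0; ring).
  apply (IG_deriv _ (fun t => - exp (- t))).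
  - intros x Hx. split. auto_derive; auto. ring.
    apply (ex_derive_continuous (fun t => exp (- t))). auto_derive; auto.
  - apply (lim_right_cont (fun t => - exp (- t))).
    apply (ex_derive_continuous (fun t => - exp (- t))). auto_derive; auto.
  - apply (lim_ext (fun t => -1 * exp (- (1 * t))) _ (-1 * 0)).
    apply filter_forall; intros; rewrite Rmult_1_l; ring. ring.
    apply lim_mulc. apply lim_expinf; lra.
Qed.

Lemma Gamma_1 : Gamma_fun 1 = 1.
Proof.
  apply (IG_unique (gint 1)). apply Gamma_IG; lra.
  apply (IG_ext (fun t => exp (- t))); [|apply IG_exp].
  intros x Hx. unfold gint. replace (1 - 1) with 0 by ring. rewrite Rpower_O by auto. ring.
Qed.

Lemma is_derive_gint_anti s x : 0 < s -> 0 < x ->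
  is_derive (fun t => - (Rpower t s * exp (- t))) x (gint (s + 1) x - s * gint s x).
Proof.
  intros Hs Hx.
  apply (is_derive_eq (fun t => -1 * (Rpower t s * exp (- t))) _ x
          (-1 * (s * Rpower x (s - 1) * exp (- x) + Rpower x s * (- exp (- x))))).
  intros; ring.
  unfold gint. replace (s + 1 - 1) with s by ring. ring.
  apply (is_derive_scal (fun t => Rpower t s * exp (- t))).
  apply (is_derive_mult (fun t => Rpower t s) (fun t => exp (- t))).
  apply is_derive_Rpower; auto. auto_derive; auto. ring.
  intros; apply Rmult_comm.
Qed.

Lemma lim_rpow_exp_inf s : filterlim (fun t => Rpower t s * exp (- t)) (Rbar_locally p_infty) (locally 0).
Proof.
  destruct (rpow_bound s) as [K [HK Hb]].
  apply (lim0_squeeze _ _ (fun t => K * exp (- (3/4 * t)))).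
  - exists 1. intros t Ht. rewrite Rabs_right by (left; apply Rmult_lt_0_compat; [apply Rpower_pos|apply exp_pos]).
    replace (exp (- (3/4 * t))) with (exp (t / 4) * exp (- t)) by (rewrite <- exp_plus; f_equal; field).
    pose proof (Hb t ltac:(lra)). pose proof (exp_pos (- t)). nra.
  - replace 0 with (K * 0) by ring. apply lim_mulc. apply lim_expinf. lra.
Qed.

Lemma lim_rpow_exp_0 s : 0 < s -> filterlim (fun t => Rpower t s * exp (- t)) (at_right 0) (locally 0).
Proof.
  intros Hs. apply (lim0_squeeze _ _ (fun t => Rpower t s)).
  - generalize (F0_ev 1 Rlt_0_1). apply filter_imp. intros t Ht.
    rewrite Rabs_right by (left; apply Rmult_lt_0_compat; [apply Rpower_pos|apply exp_pos]).
    assert (exp (- t) <= 1) by (rewrite <- exp_0; apply exp_le_exp; lra).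
    pose proof (Rpower_pos t s). nra.
  - apply lim_rpow0; auto.
Qed.

Lemma lim_opp {T} {F : (T -> Prop) -> Prop} {FF : Filter F} (f : T -> R) :
  filterlim f F (locally 0) -> filterlim (fun x => - f x) F (locally 0).
Proof.
  intros H. apply (lim_ext (fun x => -1 * f x) _ (-1 * 0)). apply filter_forall; intros; ring. ring.
  apply lim_mulc; auto.
Qed.

Lemma Gamma_succ s : 0 < s -> Gamma_fun (s + 1) = s * Gamma_fun s.
Proof.
  intros Hs.
  assert (H1 : IG (fun t => gint (s + 1) t - s * gint s t) (0 - 0)).
  { apply (IG_deriv _ (fun t => - (Rpower t s * exp (- t)))).
    - intros x Hx. split. apply is_derive_gint_anti; auto.
      apply (ex_derive_continuous (fun t => gint (s + 1) t - s * gint s t)).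
      unfold gint, Rpower. auto_derive. repeat split; auto.
    - apply lim_opp, lim_rpow_exp_0; auto.
    - apply lim_opp, lim_rpow_exp_inf. }
  assert (H2 : IG (fun t => gint (s + 1) t - s * gint s t) (Gamma_fun (s + 1) - s * Gamma_fun s)).
  { apply IG_minus. apply Gamma_IG; lra. apply IG_scal. apply Gamma_IG; lra. }
  pose proof (IG_unique _ _ _ H1 H2). lra.
Qed.

Lemma Gamma_2 : Gamma_fun 2 = 1.
Proof. replace 2 with (1 + 1) by ring. rewrite Gamma_succ, Gamma_1 by lra. ring. Qed.

Lemma abs_ln_bound c t : 0 < c -> 0 < t -> Rabs (ln t) <= / c * Rpower t (- c) + t.
Proof.
  intros Hc Ht. pose proof (Rpower_pos t (- c)) as Hp.
  assert (0 < / c) by (apply Rinv_0_lt_compat; auto).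
  destruct (Rle_dec 0 (ln t)) as [Hl|Hl].
  - rewrite Rabs_right by lra. pose proof (ln_le_sub1 t Ht). nra.
  - rewrite Rabs_left by lra.
    pose proof (ln_le_sub1 (Rpower t (- c)) Hp). rewrite ln_Rpower in H0.
    assert (- ln t <= / c * (Rpower t (- c) - 1)).
    { apply (Rmult_le_reg_l c); auto. rewrite <- Rmult_assoc, Rinv_r, Rmult_1_l by lra. lra. }
    nra.
Qed.

Lemma rp4 t n : 0 < t -> Rpower t (INR n / 4) = Rpower t (/ 4) ^ n.
Proof.
  intros Ht. rewrite <- Rpower_pow by apply Rpower_pos. rewrite Rpower_mult. f_equal. field.
Qed.

Lemma gint_shift s p t : 0 < t -> gint (s + p) t = gint s t * Rpower t p.
Proof.
  intros Ht. unfold gint. replace (s + p - 1) with ((s - 1) + p) by ring. rewrite Rpower_plus. ring.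
Qed.

Lemma ln_gint_Integ s : 1 <= s -> Integ (fun t => ln t * gint s t).
Proof.
  intros Hs.
  apply (Integ_dom _ (fun t => 4 * gint (s - /4) t + gint (s + 1) t)).
  - intros x Hx. split.
    + apply (ex_derive_continuous (fun t => ln t * gint s t)). unfold gint, Rpower. auto_derive. repeat split; auto.
    + rewrite Rabs_mult. rewrite (Rabs_right (gint s x)) by (left; unfold gint; apply Rmult_lt_0_compat; [apply Rpower_pos|apply exp_pos]).
      replace (s - /4) with (s + - / 4) by ring.
      rewrite !gint_shift by auto. rewrite Rpower_1 by auto.
      pose proof (abs_ln_bound (/4) x ltac:(lra) Hx). rewrite Rinv_inv in H.
      assert (0 < gint s x) by (unfold gint; apply Rmult_lt_0_compat; [apply Rpower_pos|apply exp_pos]).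
      nra.
  - apply Integ_plus. apply Integ_scal. apply gint_Integ; lra. apply gint_Integ; lra.
Qed.

Lemma DUI (f : R -> R -> R) (f1 g I : R -> R) (z I1 lg d : R) :
  0 < d -> (forall h, Rabs h < d -> IG (f (z + h)) (I (z + h))) -> IG f1 I1 -> IG g lg ->
  (forall h t, Rabs h < d -> 0 < t -> Rabs (f (z + h) t - f z t - h * f1 t) <= h ^ 2 * g t) ->
  is_derive I z I1.
Proof.
  intros Hd HI H1 Hg Hb.
  assert (Hz : IG (f z) (I z)) by (pose proof (HI 0 ltac:(rewrite Rabs_R0; lra)); rewrite Rplus_0_r in H; auto).
  assert (Key : forall h, Rabs h < d -> Rabs (I (z + h) - I z - h * I1) <= h ^ 2 * lg).
  { intros h Hh.
    apply (IG_norm (fun t => f (z + h) t - f z t - h * f1 t) (fun t => h ^ 2 * g t)).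
    intros; apply Hb; auto.
    apply IG_minus. apply IG_minus; auto. apply IG_scal; auto.
    apply IG_scal; auto. }
  apply is_derive_Reals. intros eps Heps.
  assert (Hl : 0 < Rabs lg + 1) by (pose proof (Rabs_pos lg); lra).
  assert (Hd2 : 0 < Rmin d (eps / (Rabs lg + 1))) by (apply Rmin_glb_lt; auto; apply Rdiv_lt_0_compat; lra).
  exists (mkposreal _ Hd2). intros h Hh0 Hh. simpl in Hh.
  assert (Hh1 : Rabs h < d) by (pose proof (Rmin_l d (eps / (Rabs lg + 1))); lra).
  assert (Hh2 : Rabs h < eps / (Rabs lg + 1)) by (pose proof (Rmin_r d (eps / (Rabs lg + 1))); lra).
  specialize (Key h Hh1).
  replace ((I (z + h) - I z) / h - I1) with ((I (z + h) - I z - h * I1) / h) by (field; auto).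
  unfold Rdiv. rewrite Rabs_mult, Rabs_inv.
  assert (Hah : 0 < Rabs h) by (apply Rabs_pos_lt; auto).
  apply (Rmult_lt_reg_r (Rabs h)); auto. rewrite Rmult_assoc, Rinv_l, Rmult_1_r by lra.
  eapply Rle_lt_trans; [exact Key|].
  replace (h ^ 2) with (Rabs h * Rabs h) by (rewrite <- Rabs_mult, Rabs_right; [ring|nra]).
  pose proof (Rle_abs lg).
  apply (Rmult_lt_compat_l (Rabs lg + 1)) in Hh2; auto.
  replace ((Rabs lg + 1) * (eps / (Rabs lg + 1))) with eps in Hh2 by (field; lra).
  nra.
Qed.

Lemma gint_pos s t : 0 < gint s t.
Proof. unfold gint; apply Rmult_lt_0_compat; [apply Rpower_pos|apply exp_pos]. Qed.

Lemma poly_bound A E u v : 0 <= A -> 0 <= E -> 0 < u -> 0 < v -> u * v = 1 ->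
  A <= 4 * v + u ^ 4 -> E <= u + v ->
  A ^ 2 * E <= 32 * v + 32 * v ^ 3 + 2 * u ^ 9 + 2 * u ^ 7.
Proof.
  intros HA HE Hu Hv Huv H1 H2.
  assert (A ^ 2 <= (4 * v + u ^ 4) ^ 2) by (apply pow_incr; lra).
  assert ((4 * v + u ^ 4) ^ 2 <= 2 * (16 * v ^ 2 + u ^ 8)).
  { assert (0 <= (4 * v - u ^ 4) ^ 2) by apply pow2_ge_0. assert (Eq : 2 * (16 * v ^ 2 + u ^ 8) - (4 * v + u ^ 4) ^ 2 = (4 * v - u ^ 4) ^ 2) by ring. lra. }
  assert (A ^ 2 * E <= 2 * (16 * v ^ 2 + u ^ 8) * (u + v)).
  { apply Rmult_le_compat; [apply pow2_ge_0|auto|lra|auto]. }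
  assert (E1 : 2 * (16 * v ^ 2 + u ^ 8) * (u + v) = 32 * v * (u * v) + 32 * v ^ 3 + 2 * u ^ 9 + 2 * u ^ 7 * (u * v)) by ring.
  rewrite Huv in E1. lra.
Qed.

Lemma Gamma_deriv s0 : 1 <= s0 ->
  is_derive Gamma_fun s0 (RInt_gen (fun t => ln t * gint s0 t) (at_right 0) (Rbar_locally p_infty)).
Proof.
  intros Hs0.
  set (g := fun t => 32 * gint (s0 + - / 4) t + 32 * gint (s0 + - (3/4)) t + 2 * gint (s0 + 9/4) t + 2 * gint (s0 + 7/4) t).
  assert (Ig : Integ g).
  { unfold g. apply Integ_plus; [apply Integ_plus; [apply Integ_plus|]|].
    all: apply Integ_scal; apply gint_Integ; lra. }
  apply (DUI gint (fun t => ln t * gint s0 t) g Gamma_fun s0 _ (RInt_gen g (at_right 0) (Rbar_locally p_infty)) (/4)).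
  - lra.
  - intros h Hh. apply Gamma_IG. pose proof (Rle_abs (-h)). rewrite Rabs_Ropp in H. lra.
  - apply Integ_IG, ln_gint_Integ; auto.
  - apply Integ_IG, Ig.
  - intros h t Hh Ht.
    set (u := Rpower t (/ 4)). set (v := Rpower t (- / 4)).
    assert (Hu : 0 < u) by apply Rpower_pos. assert (Hv : 0 < v) by apply Rpower_pos.
    assert (Huv : u * v = 1).
    { unfold u, v. rewrite <- Rpower_plus. replace (/4 + - /4) with 0 by ring. apply Rpower_O; auto. }
    assert (Pn : forall n, Rpower t (INR n / 4) = u ^ n) by (intros; apply rp4; auto).
    assert (P3 : Rpower t (- (3/4)) = v ^ 3).
    { unfold v. rewrite <- Rpower_pow by apply Rpower_pos. rewrite Rpower_mult. f_equal. simpl. field. }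
    assert (P9 : Rpower t (9/4) = u ^ 9) by (rewrite <- Pn; f_equal; simpl; field).
    assert (P7 : Rpower t (7/4) = u ^ 7) by (rewrite <- Pn; f_equal; simpl; field).
    assert (P4 : t = u ^ 4) by (rewrite <- Pn; replace (INR 4 / 4) with 1 by (simpl; field); rewrite Rpower_1; auto).
    assert (Hg : g t = gint s0 t * (32 * v + 32 * v ^ 3 + 2 * u ^ 9 + 2 * u ^ 7)).
    { unfold g. rewrite !gint_shift by auto. fold v. rewrite P3, P9, P7. ring. }
    rewrite Hg. rewrite gint_shift by auto.
    replace (gint s0 t * Rpower t h - gint s0 t - h * (ln t * gint s0 t))
      with (gint s0 t * (exp (h * ln t) - 1 - h * ln t)) by (unfold Rpower; ring).
    rewrite Rabs_mult, (Rabs_right (gint s0 t)) by (left; apply gint_pos).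
    pose proof (gint_pos s0 t) as HG.
    pose proof (exp_taylor (h * ln t)) as HT.
    assert (HA : Rabs (ln t) <= 4 * v + u ^ 4).
    { pose proof (abs_ln_bound (/4) t ltac:(lra) Ht). rewrite Rinv_inv in H. rewrite <- P4. auto. }
    assert (HE : exp (Rabs (h * ln t)) <= u + v).
    { rewrite Rabs_mult.
      assert (Rabs h * Rabs (ln t) <= / 4 * Rabs (ln t)) by (apply Rmult_le_compat_r; [apply Rabs_pos|lra]).
      destruct (Rle_dec 0 (ln t)).
      - rewrite (Rabs_right (ln t)) in H |- * by lra.
        assert (exp (Rabs h * ln t) <= u).
        { unfold u, Rpower. apply exp_le_exp. lra. }
        lra.
      - rewrite (Rabs_left (ln t)) in H |- * by lra.
        assert (exp (Rabs h * - ln t) <= v).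
        { unfold v, Rpower. apply exp_le_exp. lra. }
        lra. }
    assert (Hpb := poly_bound (Rabs (ln t)) (exp (Rabs (h * ln t))) u v (Rabs_pos _) (Rlt_le _ _ (exp_pos _)) Hu Hv Huv HA HE).
    assert (E2 : (h * ln t) ^ 2 = h ^ 2 * Rabs (ln t) ^ 2).
    { rewrite pow2_abs. ring. }
    rewrite E2 in HT.
    assert (0 <= h ^ 2) by apply pow2_ge_0.
    assert (h ^ 2 * Rabs (ln t) ^ 2 * exp (Rabs (h * ln t)) <= h ^ 2 * (32 * v + 32 * v ^ 3 + 2 * u ^ 9 + 2 * u ^ 7)).
    { rewrite Rmult_assoc. apply Rmult_le_compat_l; auto. }
    assert (Rabs (exp (h * ln t) - 1 - h * ln t) <= h ^ 2 * (32 * v + 32 * v ^ 3 + 2 * u ^ 9 + 2 * u ^ 7)) by lra.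
    apply (Rmult_le_compat_l (gint s0 t)) in H1; [|lra]. lra.
Qed.

Lemma lim_plus0 {T} {F : (T -> Prop) -> Prop} {FF : Filter F} (f g : T -> R) :
  filterlim f F (locally 0) -> filterlim g F (locally 0) -> filterlim (fun x => f x + g x) F (locally 0).
Proof.
  intros H1 H2. apply filterlim_locally. intros eps.
  assert (He : 0 < eps / 2) by (destruct eps; simpl; lra).
  generalize (filter_and _ _ (proj1 (filterlim_locally _ _) H1 (mkposreal _ He))
                              (proj1 (filterlim_locally _ _) H2 (mkposreal _ He))).
  apply filter_imp. intros x [A B]. apply ballR1 in A. apply ballR1 in B. apply ballR2.
  simpl in A, B |- *. change (Rabs (f x + g x - 0) < eps). change (Rabs (f x - 0) < eps / 2) in A.
  change (Rabs (g x - 0) < eps / 2) in B. rewrite Rminus_0_r in *.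
  eapply Rle_lt_trans. apply Rabs_triang. lra.
Qed.

Lemma lim_mulc0 {T} {F : (T -> Prop) -> Prop} {FF : Filter F} (c : R) (f : T -> R) :
  filterlim f F (locally 0) -> filterlim (fun x => c * f x) F (locally 0).
Proof.
  intros H. apply (lim_ext (fun x => c * f x) _ (c * 0)). apply filter_forall; auto. ring.
  apply lim_mulc; auto.
Qed.

Definition L1 := RInt_gen (fun t => ln t * gint 1 t) (at_right 0) (Rbar_locally p_infty).

Lemma L1_IG : IG (fun t => ln t * gint 1 t) L1.
Proof. apply Integ_IG, ln_gint_Integ; lra. Qed.

Lemma L2_eq : RInt_gen (fun t => ln t * gint 2 t) (at_right 0) (Rbar_locally p_infty) = 1 + L1.
Proof.
  set (L2 := RInt_gen (fun t => ln t * gint 2 t) (at_right 0) (Rbar_locally p_infty)).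
  assert (I2 : IG (fun t => ln t * gint 2 t) L2) by (apply Integ_IG, ln_gint_Integ; lra).
  assert (H1 : IG (fun t => ln t * gint 2 t - ln t * gint 1 t - gint 1 t) (L2 - L1 - 1)).
  { apply IG_minus. apply IG_minus; auto. apply L1_IG. pose proof (Gamma_IG 1 Rlt_0_1) as G1; rewrite Gamma_1 in G1; exact G1. }
  assert (H2 : IG (fun t => ln t * gint 2 t - ln t * gint 1 t - gint 1 t) (0 - 0)).
  { apply (IG_deriv _ (fun t => - (t * ln t * exp (- t)))).
    - intros x Hx. split.
      + apply (is_derive_eq (fun t => - (t * ln t * exp (- t))) _ x
          (- ((1 * ln x + x * / x) * exp (- x) + x * ln x * (- exp (- x))))).
        auto. unfold gint. replace (2 - 1) with 1 by ring. replace (1 - 1) with 0 by ring.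
        rewrite Rpower_1, Rpower_O by auto. field. lra.
        auto_derive. auto. ring.
      + apply (ex_derive_continuous (fun t => ln t * gint 2 t - ln t * gint 1 t - gint 1 t)).
        unfold gint, Rpower. auto_derive. repeat split; auto.
    - apply lim_opp. apply (lim0_squeeze _ _ (fun t => 2 * Rpower t (/2) + Rpower t 2)).
      + generalize (F0_ev 1 Rlt_0_1). apply filter_imp. intros t Ht.
        pose proof (abs_ln_bound (/2) t ltac:(lra) (proj1 Ht)) as Hl. rewrite Rinv_inv in Hl.
        assert (E1 : t * Rpower t (- / 2) = Rpower t (/ 2)).
        { rewrite <- (Rpower_1 t) at 1 by lra. rewrite <- Rpower_plus. f_equal. field. }
        assert (E2 : t * t = Rpower t 2).
        { replace 2 with (INR 2) by (simpl; ring). rewrite Rpower_pow by lra. ring. }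
        rewrite !Rabs_mult. rewrite (Rabs_right t), (Rabs_right (exp (- t))) by (left; try apply exp_pos; lra).
        assert (exp (- t) <= 1) by (rewrite <- exp_0; apply exp_le_exp; lra).
        assert (t * Rabs (ln t) <= 2 * Rpower t (/ 2) + Rpower t 2).
        { rewrite <- E1, <- E2. assert (0 < t) by lra. 
          apply (Rmult_le_compat_l t) in Hl; lra. }
        pose proof (Rabs_pos (ln t)). assert (0 <= t * Rabs (ln t)) by (apply Rmult_le_pos; lra).
        assert (t * Rabs (ln t) * exp (- t) <= t * Rabs (ln t)).
        { pose proof (exp_pos (- t)). apply (Rmult_le_compat_l (t * Rabs (ln t))) in H; lra. }
        lra.
      + apply lim_plus0. apply lim_mulc0, lim_rpow0; lra.
        apply lim_rpow0; lra.
    - apply lim_opp. apply (lim0_squeeze _ _ (fun t => Rpower t 2 * exp (- t))).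
      + exists 1. intros t Ht.
        assert (E2 : t * t = Rpower t 2).
        { replace 2 with (INR 2) by (simpl; ring). rewrite Rpower_pow by lra. ring. }
        rewrite <- E2. pose proof (ln_le_sub1 t ltac:(lra)).
        assert (0 <= ln t) by (rewrite <- ln_1; destruct (Rle_lt_or_eq_dec 1 t) as [Hlt|Heq]; [lra| left; apply ln_increasing; lra| subst; lra]).
        rewrite !Rabs_mult. rewrite (Rabs_right t), (Rabs_right (exp (- t))), (Rabs_right (ln t)) by (apply Rle_ge; first [apply Rlt_le, exp_pos | lra]).
        pose proof (exp_pos (- t)).
        assert (t * ln t <= t * t) by (apply Rmult_le_compat_l; lra).
        apply Rmult_le_compat_r; lra.
      + apply lim_rpow_exp_inf. }
  pose proof (IG_unique _ _ _ H1 H2). lra.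
Qed.

Lemma digamma_sum : digamma 1 + digamma 2 = 1 + 2 * L1.
Proof.
  unfold digamma. rewrite Gamma_1, Gamma_2.
  rewrite (is_derive_unique Gamma_fun 1 L1).
  rewrite (is_derive_unique Gamma_fun 2 (RInt_gen (fun t => ln t * gint 2 t) (at_right 0) (Rbar_locally p_infty))).
  rewrite L2_eq. field.
  apply Gamma_deriv; lra.
  apply Gamma_deriv; lra.
Qed.

Definition Gi z t := exp (- t) * (1 - exp (- (z / t))).
Definition Ji z t := exp (- t) * exp (- (z / t)) / t.
Definition J2i z t := - (exp (- t) * exp (- (z / t)) / t ^ 2).
Definition Ki z t := exp (- t) * exp (- (z / t)).
Definition FG z := RInt_gen (Gi z) (at_right 0) (Rbar_locally p_infty).
Definition FJ z := RInt_gen (Ji z) (at_right 0) (Rbar_locally p_infty).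
Definition FJ2 z := RInt_gen (J2i z) (at_right 0) (Rbar_locally p_infty).

Lemma exp1_Integ : Integ (fun t => exp (- t)).
Proof.
  apply (Integ_dom _ (gint 1)). intros x Hx. split.
  apply (ex_derive_continuous (fun t => exp (- t))); auto_derive; auto.
  unfold gint. replace (1 - 1) with 0 by ring. rewrite Rpower_O by auto.
  rewrite Rabs_right by (left; apply exp_pos). lra.
  apply gint_Integ; lra.
Qed.

Lemma exp_neg_le1 x : 0 <= x -> exp (- x) <= 1.
Proof. intros. rewrite <- exp_0. apply exp_le_exp. lra. Qed.

Lemma Gi_IG z : 0 <= z -> IG (Gi z) (FG z).
Proof.
  intros Hz. apply Integ_IG. apply (Integ_dom _ (fun t => 1 * exp (- t))).
  - intros x Hx. split.
    + apply (ex_derive_continuous (Gi z)). unfold Gi. auto_derive. lra.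
    + unfold Gi. assert (0 <= z / x) by (apply Rdiv_le_0_compat; lra).
      pose proof (exp_neg_le1 _ H). pose proof (exp_pos (- (z / x))). pose proof (exp_pos (- x)).
      rewrite Rabs_right by (apply Rle_ge, Rmult_le_pos; lra). nra.
  - apply Integ_scal, exp1_Integ.
Qed.

Lemma Ki_IG z : 0 <= z -> IG (Ki z) (1 - FG z).
Proof.
  intros Hz. apply (IG_ext (fun t => exp (- t) - Gi z t)).
  intros; unfold Gi, Ki; ring.
  apply IG_minus. apply IG_exp. apply Gi_IG; auto.
Qed.

Lemma inv_t_bound z t : 0 < z -> 0 < t -> exp (- (z / t)) / t <= / z.
Proof.
  intros Hz Ht. pose proof (xexp1 (z / t) ltac:(apply Rlt_le, Rdiv_lt_0_compat; lra)).
  replace (exp (- (z / t)) / t) with (/ z * (z / t * exp (- (z / t)))) by (field; lra).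
  pose proof (Rinv_0_lt_compat z Hz). 
  apply (Rmult_le_compat_l (/ z)) in H; lra.
Qed.

Lemma inv_t2_bound z t : 0 < z -> 0 < t -> exp (- (z / t)) / t ^ 2 <= 4 / z ^ 2.
Proof.
  intros Hz Ht. pose proof (xexp2 (z / t) ltac:(apply Rlt_le, Rdiv_lt_0_compat; lra)).
  replace (exp (- (z / t)) / t ^ 2) with (/ z ^ 2 * ((z / t) ^ 2 * exp (- (z / t)))) by (field; lra).
  assert (0 < / z ^ 2) by (apply Rinv_0_lt_compat; nra).
  apply (Rmult_le_compat_l (/ z ^ 2)) in H; [|lra]. unfold Rdiv. lra.
Qed.

Lemma inv_t3_bound z t : 0 < z -> 0 < t -> exp (- (z / t)) / t ^ 3 <= 27 / z ^ 3.
Proof.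
  intros Hz Ht. pose proof (xexp3 (z / t) ltac:(apply Rlt_le, Rdiv_lt_0_compat; lra)).
  replace (exp (- (z / t)) / t ^ 3) with (/ z ^ 3 * ((z / t) ^ 3 * exp (- (z / t)))) by (field; lra).
  assert (0 < / z ^ 3) by (apply Rinv_0_lt_compat; apply pow_lt; lra).
  apply (Rmult_le_compat_l (/ z ^ 3)) in H; [|lra]. unfold Rdiv. lra.
Qed.

Lemma Ji_IG z : 0 < z -> IG (Ji z) (FJ z).
Proof.
  intros Hz. apply Integ_IG. apply (Integ_dom _ (fun t => / z * exp (- t))).
  - intros x Hx. split.
    + apply (ex_derive_continuous (Ji z)). unfold Ji. auto_derive. lra.
    + unfold Ji. rewrite Rabs_right by (apply Rle_ge, Rlt_le, Rdiv_lt_0_compat; [apply Rmult_lt_0_compat; apply exp_pos|lra]).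
      pose proof (inv_t_bound z x Hz Hx). pose proof (exp_pos (- x)).
      replace (exp (- x) * exp (- (z / x)) / x) with (exp (- x) * (exp (- (z / x)) / x)) by (field; lra).
      rewrite Rmult_comm. apply Rmult_le_compat_r; lra.
  - apply Integ_scal, exp1_Integ.
Qed.

Lemma J2i_IG z : 0 < z -> IG (J2i z) (FJ2 z).
Proof.
  intros Hz. apply Integ_IG. apply (Integ_dom _ (fun t => (4 / z ^ 2) * exp (- t))).
  - intros x Hx. split.
    + apply (ex_derive_continuous (J2i z)). unfold J2i. auto_derive. repeat split; try (intro; nra).
    + unfold J2i. rewrite Rabs_Ropp.
      rewrite Rabs_right by (apply Rle_ge, Rlt_le, Rdiv_lt_0_compat; [apply Rmult_lt_0_compat; apply exp_pos|nra]).
      pose proof (inv_t2_bound z x Hz Hx). pose proof (exp_pos (- x)).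
      replace (exp (- x) * exp (- (z / x)) / x ^ 2) with (exp (- x) * (exp (- (z / x)) / x ^ 2)) by (field; lra).
      rewrite (Rmult_comm (4 / z ^ 2)). apply Rmult_le_compat_l; lra.
  - apply Integ_scal, exp1_Integ.
Qed.

Lemma rem_bound z h t : 0 < z -> Rabs h < z / 2 -> 0 < t ->
  Rabs (exp (- ((z + h) / t)) - exp (- (z / t)) + h / t * exp (- (z / t)))
    <= h ^ 2 * (exp (- (z / (2 * t))) / t ^ 2).
Proof.
  intros Hz Hh Ht.
  replace (exp (- ((z + h) / t)) - exp (- (z / t)) + h / t * exp (- (z / t)))
    with (exp (- (z / t)) * (exp (- (h / t)) - 1 - - (h / t)))
    by (replace (- ((z + h) / t)) with (- (z / t) + - (h / t)) by (field; lra); rewrite exp_plus; ring).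
  rewrite Rabs_mult, Rabs_right by (left; apply exp_pos).
  pose proof (exp_taylor (- (h / t))) as HT.
  assert (Ea : Rabs (- (h / t)) = Rabs h / t) by (rewrite Rabs_Ropp, Rabs_div, (Rabs_right t) by lra; auto).
  rewrite Ea in HT.
  assert (Eb : (- (h / t)) ^ 2 = h ^ 2 / t ^ 2) by (field; lra). rewrite Eb in HT.
  assert (exp (- (z / t)) * exp (Rabs h / t) <= exp (- (z / (2 * t)))).
  { rewrite <- exp_plus. apply exp_le_exp.
    assert (Rabs h / t <= z / (2 * t)).
    { replace (z / (2 * t)) with ((z / 2) / t) by (field; lra). unfold Rdiv at 1 3. apply Rmult_le_compat_r. left; apply Rinv_0_lt_compat; lra.
      lra. }
    assert (z / t = 2 * (z / (2 * t))) by (field; lra). lra. }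
  pose proof (exp_pos (- (z / t))).
  apply (Rmult_le_compat_l (exp (- (z / t)))) in HT; [|lra].
  assert (0 <= h ^ 2 / t ^ 2) by (apply Rdiv_le_0_compat; [apply pow2_ge_0|apply pow_lt; lra]).
  apply Rle_trans with (h ^ 2 / t ^ 2 * (exp (- (z / t)) * exp (Rabs h / t))).
  lra.
  replace (h ^ 2 * (exp (- (z / (2 * t))) / t ^ 2)) with (h ^ 2 / t ^ 2 * exp (- (z / (2 * t)))) by (field; lra).
  apply Rmult_le_compat_l; lra.
Qed.

Lemma habs_bound z h : 0 < z -> Rabs h < z / 2 -> 0 < z + h.
Proof. intros. pose proof (Rle_abs (- h)). rewrite Rabs_Ropp in H1. lra. Qed.

Lemma FG_deriv z : 0 < z -> is_derive FG z (FJ z).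
Proof.
  intros Hz.
  apply (DUI Gi (Ji z) (fun t => 16 / z ^ 2 * exp (- t)) FG z (FJ z) (16 / z ^ 2 * 1) (z / 2)).
  - lra.
  - intros h Hh. apply Gi_IG. pose proof (habs_bound z h Hz Hh). lra.
  - apply Ji_IG; auto.
  - apply IG_scal, IG_exp.
  - intros h t Hh Ht.
    pose proof (rem_bound z h t Hz Hh Ht) as HR.
    replace (Gi (z + h) t - Gi z t - h * Ji z t) with
      (- exp (- t) * (exp (- ((z + h) / t)) - exp (- (z / t)) + h / t * exp (- (z / t))))
      by (unfold Gi, Ji; field; lra).
    rewrite Rabs_mult, Rabs_Ropp, Rabs_right by (left; apply exp_pos).
    pose proof (inv_t2_bound (z / 2) t ltac:(lra) Ht) as HB.
    replace (z / 2 / t) with (z / (2 * t)) in HB by (field; lra).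
    replace ((z / 2) ^ 2) with (z ^ 2 / 4) in HB by field.
    replace (4 / (z ^ 2 / 4)) with (16 / z ^ 2) in HB by (field; lra).
    pose proof (exp_pos (- t)). assert (0 <= h ^ 2) by apply pow2_ge_0.
    apply Rle_trans with (exp (- t) * (h ^ 2 * (exp (- (z / (2 * t))) / t ^ 2))).
    apply Rmult_le_compat_l; lra.
    replace (h ^ 2 * (16 / z ^ 2 * exp (- t))) with (exp (- t) * (h ^ 2 * (16 / z ^ 2))) by ring.
    apply Rmult_le_compat_l; [lra|]. apply Rmult_le_compat_l; lra.
Qed.

Lemma FJ_deriv z : 0 < z -> is_derive FJ z (FJ2 z).
Proof.
  intros Hz.
  apply (DUI Ji (J2i z) (fun t => 216 / z ^ 3 * exp (- t)) FJ z (FJ2 z) (216 / z ^ 3 * 1) (z / 2)).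
  - lra.
  - intros h Hh. apply Ji_IG. apply (habs_bound z h Hz Hh).
  - apply J2i_IG; auto.
  - apply IG_scal, IG_exp.
  - intros h t Hh Ht.
    pose proof (rem_bound z h t Hz Hh Ht) as HR.
    replace (Ji (z + h) t - Ji z t - h * J2i z t) with
      (exp (- t) / t * (exp (- ((z + h) / t)) - exp (- (z / t)) + h / t * exp (- (z / t))))
      by (unfold Ji, J2i; field; lra).
    rewrite Rabs_mult, Rabs_right by (left; apply Rdiv_lt_0_compat; [apply exp_pos|lra]).
    pose proof (inv_t3_bound (z / 2) t ltac:(lra) Ht) as HB.
    replace (z / 2 / t) with (z / (2 * t)) in HB by (field; lra).
    replace (27 / (z / 2) ^ 3) with (216 / z ^ 3) in HB by (field; lra).
    pose proof (exp_pos (- t)). assert (0 <= h ^ 2) by apply pow2_ge_0.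
    assert (0 < exp (- t) / t) by (apply Rdiv_lt_0_compat; lra).
    apply Rle_trans with (exp (- t) / t * (h ^ 2 * (exp (- (z / (2 * t))) / t ^ 2))).
    apply Rmult_le_compat_l; lra.
    replace (exp (- t) / t * (h ^ 2 * (exp (- (z / (2 * t))) / t ^ 2)))
      with (exp (- t) * (h ^ 2 * (exp (- (z / (2 * t))) / t ^ 3))) by (field; lra).
    replace (h ^ 2 * (216 / z ^ 3 * exp (- t))) with (exp (- t) * (h ^ 2 * (216 / z ^ 3))) by ring.
    apply Rmult_le_compat_l; [lra|]. apply Rmult_le_compat_l; lra.
Qed.

Lemma lim_id0 : filterlim (fun t : R => t) (at_right 0) (locally 0).
Proof. apply (lim_right_cont (fun t => t)). apply (ex_derive_continuous (fun t : R => t)). auto_derive; auto. Qed.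

Lemma Ki_pos w t : 0 < Ki w t.
Proof. unfold Ki; apply Rmult_lt_0_compat; apply exp_pos. Qed.

Lemma exp_wt_le w t : 0 < w -> 0 < t -> exp (- (w / t)) <= t / w.
Proof.
  intros Hw Ht. pose proof (xexp1 (w / t) ltac:(apply Rlt_le, Rdiv_lt_0_compat; lra)).
  pose proof (exp_pos (- (w / t))).
  apply (Rmult_le_reg_l (w / t)). apply Rdiv_lt_0_compat; lra.
  replace (w / t * (t / w)) with 1 by (field; lra). lra.
Qed.

Lemma Ki_lim0 w : 0 < w -> filterlim (Ki w) (at_right 0) (locally 0).
Proof.
  intros Hw. apply (lim0_squeeze _ _ (fun t => / w * t)).
  - generalize (F0_ev 1 Rlt_0_1). apply filter_imp. intros t Ht.
    rewrite Rabs_right by (left; apply Ki_pos). unfold Ki.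
    pose proof (exp_wt_le w t Hw (proj1 Ht)). pose proof (exp_neg_le1 t ltac:(lra)).
    pose proof (exp_pos (- t)). pose proof (exp_pos (- (w / t))).
    apply Rle_trans with (exp (- (w / t))). nra. unfold Rdiv in H; lra.
  - apply lim_mulc0, lim_id0.
Qed.

Lemma Ki_liminf w : 0 <= w -> filterlim (Ki w) (Rbar_locally p_infty) (locally 0).
Proof.
  intros Hw. apply (lim0_squeeze _ _ (fun t => exp (- (1 * t)))).
  - exists 0. intros t Ht. rewrite Rabs_right by (left; apply Ki_pos). unfold Ki. rewrite Rmult_1_l.
    pose proof (exp_neg_le1 (w / t) ltac:(apply Rdiv_le_0_compat; lra)). pose proof (exp_pos (- t)). nra.
  - apply lim_expinf; lra.
Qed.

Lemma wK_IG w : 0 < w -> IG (fun t => w / t ^ 2 * Ki w t) (1 - FG w).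
Proof.
  intros Hw.
  assert (H1 : IG (fun t => w / t ^ 2 * Ki w t - Ki w t) (0 - 0)).
  { apply (IG_deriv _ (Ki w)).
    - intros x Hx. split.
      + unfold Ki. auto_derive. lra. unfold Rdiv. field. lra.
      + apply (ex_derive_continuous (fun t => w / t ^ 2 * Ki w t - Ki w t)). unfold Ki. auto_derive.
        repeat split; try (intro; nra).
    - apply Ki_lim0; auto.
    - apply Ki_liminf; lra. }
  apply (IG_ext (fun t => (w / t ^ 2 * Ki w t - Ki w t) + Ki w t)). intros; ring.
  replace (1 - FG w) with ((0 - 0) + (1 - FG w)) by ring.
  apply IG_plus; auto. apply Ki_IG; lra.
Qed.

Lemma zJ2 w : 0 < w -> w * FJ2 w = - (1 - FG w).
Proof.
  intros Hw.
  assert (H : IG (fun t => w / t ^ 2 * Ki w t) (- w * FJ2 w)).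
  { apply (IG_ext (fun t => - w * J2i w t)). intros t Ht. unfold J2i, Ki. field. lra.
    apply IG_scal. apply J2i_IG; auto. }
  pose proof (IG_unique _ _ _ H (wK_IG w Hw)). lra.
Qed.

Lemma lnexp_dom t : 0 < t -> Rabs (ln t) * exp (- t) <= 2 * gint (/ 2) t + gint 2 t.
Proof.
  intros Ht. pose proof (abs_ln_bound (/ 2) t ltac:(lra) Ht) as H. rewrite Rinv_inv in H.
  unfold gint. replace (/ 2 - 1) with (- / 2) by field. replace (2 - 1) with 1 by ring.
  rewrite Rpower_1 by auto. pose proof (exp_pos (- t)).
  apply (Rmult_le_compat_r (exp (- t))) in H; lra.
Qed.

Lemma lnexp_Integ : Integ (fun t => 2 * gint (/ 2) t + gint 2 t).
Proof. apply Integ_plus. apply Integ_scal, gint_Integ; lra. apply gint_Integ; lra. Qed.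

Definition Aw w := RInt_gen (fun t => ln t * Ki w t) (at_right 0) (Rbar_locally p_infty).
Definition Bw w := RInt_gen (fun t => ln t * (w / t ^ 2 * Ki w t)) (at_right 0) (Rbar_locally p_infty).

Lemma Aw_IG w : 0 <= w -> IG (fun t => ln t * Ki w t) (Aw w).
Proof.
  intros Hw. apply Integ_IG. apply (Integ_dom _ (fun t => 2 * gint (/ 2) t + gint 2 t)); [|apply lnexp_Integ].
  intros x Hx. split.
  - apply (ex_derive_continuous (fun t => ln t * Ki w t)). unfold Ki. auto_derive. repeat split; lra.
  - unfold Ki. rewrite Rabs_mult, (Rabs_right (exp (- x) * _)) by (left; apply Rmult_lt_0_compat; apply exp_pos).
    pose proof (lnexp_dom x Hx). pose proof (exp_neg_le1 (w / x) ltac:(apply Rdiv_le_0_compat; lra)).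
    pose proof (exp_pos (- x)). pose proof (Rabs_pos (ln x)).
    assert (Rabs (ln x) * (exp (- x) * exp (- (w / x))) <= Rabs (ln x) * exp (- x)).
    { rewrite <- (Rmult_1_r (Rabs (ln x) * exp (- x))). rewrite <- Rmult_assoc.
      apply Rmult_le_compat_l; [apply Rmult_le_pos|]; lra. }
    lra.
Qed.

Lemma Bw_IG w : 0 < w -> IG (fun t => ln t * (w / t ^ 2 * Ki w t)) (Bw w).
Proof.
  intros Hw. apply Integ_IG. apply (Integ_dom _ (fun t => 4 / w * (2 * gint (/ 2) t + gint 2 t))).
  - intros x Hx. split.
    + apply (ex_derive_continuous (fun t => ln t * (w / t ^ 2 * Ki w t))). unfold Ki. auto_derive.
      repeat split; try lra; try (intro; nra).
    + pose proof (lnexp_dom x Hx). pose proof (inv_t2_bound w x Hw Hx).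
      pose proof (exp_pos (- x)). pose proof (Rabs_pos (ln x)). pose proof (exp_pos (- (w / x))).
      replace (ln x * (w / x ^ 2 * Ki w x)) with ((ln x * exp (- x)) * (w * (exp (- (w / x)) / x ^ 2)))
        by (unfold Ki; field; lra).
      rewrite Rabs_mult, (Rabs_mult (ln x)), (Rabs_right (exp (- x))), (Rabs_right (w * _)) by
        (apply Rle_ge; first [apply Rlt_le, exp_pos | apply Rmult_le_pos; [lra|apply Rdiv_le_0_compat; [lra|nra]]]).
      assert (w * (exp (- (w / x)) / x ^ 2) <= 4 / w).
      { apply (Rmult_le_compat_l w) in H0; [|lra]. replace (w * (4 / w ^ 2)) with (4 / w) in H0 by (field; lra). auto. }
      assert (0 <= w * (exp (- (w / x)) / x ^ 2)) by (apply Rmult_le_pos; [lra|apply Rdiv_le_0_compat; [lra|nra]]).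
      rewrite Rmult_comm. apply Rmult_le_compat; try lra. apply Rmult_le_pos; lra.
  - apply Integ_scal, lnexp_Integ.
Qed.

Lemma J_AB w : 0 < w -> FJ w = Aw w - Bw w.
Proof.
  intros Hw.
  assert (H1 : IG (fun t => Ji w t + ln t * (w / t ^ 2 * Ki w t) - ln t * Ki w t) (0 - 0)).
  { apply (IG_deriv _ (fun t => ln t * Ki w t)).
    - intros x Hx. split.
      + unfold Ki, Ji. auto_derive. lra. unfold Rdiv. field. lra.
      + apply (ex_derive_continuous (fun t => Ji w t + ln t * (w / t ^ 2 * Ki w t) - ln t * Ki w t)).
        unfold Ki, Ji. auto_derive. repeat split; try lra; try (intro; nra).
    - apply (lim0_squeeze _ _ (fun t => 4 / w ^ 2 * t + t)).
      + generalize (F0_ev 1 Rlt_0_1). apply filter_imp. intros t Ht.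
        pose proof (abs_ln_bound 1 t Rlt_0_1 (proj1 Ht)) as Hl.
        rewrite Rinv_1, Rmult_1_l, Rpower_Ropp, Rpower_1 in Hl by lra.
        pose proof (inv_t2_bound w t Hw (proj1 Ht)) as Hb.
        rewrite Rabs_mult, (Rabs_right (Ki w t)) by (left; apply Ki_pos).
        unfold Ki. pose proof (exp_neg_le1 t ltac:(lra)). pose proof (exp_pos (- t)).
        pose proof (exp_pos (- (w / t))). pose proof (exp_neg_le1 (w / t) ltac:(apply Rdiv_le_0_compat; lra)).
        assert (E1 : exp (- (w / t)) / t <= 4 / w ^ 2 * t).
        { apply (Rmult_le_compat_l t) in Hb; [|lra].
          replace (t * (exp (- (w / t)) / t ^ 2)) with (exp (- (w / t)) / t) in Hb by (field; lra). lra. }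
        assert (Rabs (ln t) * exp (- (w / t)) <= exp (- (w / t)) / t + t).
        { apply (Rmult_le_compat_r (exp (- (w / t)))) in Hl; [|lra].
          replace ((/ t + t) * exp (- (w / t))) with (exp (- (w / t)) / t + t * exp (- (w / t))) in Hl by (field; lra).
          assert (t * exp (- (w / t)) <= t) by (pose proof (Rmult_le_compat_l t _ _ ltac:(lra) H2); lra).
          lra. }
        assert (Rabs (ln t) * (exp (- t) * exp (- (w / t))) <= Rabs (ln t) * exp (- (w / t))).
        { pose proof (Rabs_pos (ln t)). rewrite <- Rmult_assoc, (Rmult_comm (Rabs (ln t)) (exp (- t))), Rmult_assoc.
          pose proof (Rmult_le_pos _ _ H4 (Rlt_le _ _ H1)).
          apply Rle_trans with (1 * (Rabs (ln t) * exp (- (w / t)))). apply Rmult_le_compat_r; lra. lra. }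
        lra.
      + apply lim_plus0. apply lim_mulc0, lim_id0. apply lim_id0.
    - apply (lim0_squeeze _ _ (fun t => Rpower t 1 * exp (- t))).
      + exists 1. intros t Ht. rewrite Rpower_1 by lra.
        pose proof (ln_le_sub1 t ltac:(lra)).
        assert (0 <= ln t) by (rewrite <- ln_1; destruct (Rle_lt_or_eq_dec 1 t) as [Hlt|Heq]; [lra| left; apply ln_increasing; lra| subst; lra]).
        rewrite Rabs_mult, (Rabs_right (ln t)), (Rabs_right (Ki w t)) by (apply Rle_ge; first [apply Rlt_le, Ki_pos|lra]).
        unfold Ki. pose proof (exp_neg_le1 (w / t) ltac:(apply Rdiv_le_0_compat; lra)).
        pose proof (exp_pos (- t)). pose proof (exp_pos (- (w / t))).
        assert (exp (- t) * exp (- (w / t)) <= exp (- t)) by nra.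
        apply Rmult_le_compat; try lra. apply Rmult_le_pos; lra.
      + apply lim_rpow_exp_inf. }
  assert (H2 : IG (fun t => Ji w t + ln t * (w / t ^ 2 * Ki w t) - ln t * Ki w t) (FJ w + Bw w - Aw w)).
  { apply IG_minus. apply IG_plus. apply Ji_IG; auto. apply Bw_IG; auto. apply Aw_IG; lra. }
  pose proof (IG_unique _ _ _ H1 H2). lra.
Qed.

Lemma Aw_inv w : 0 < w -> Aw w = ln w * (1 - FG w) - Bw w.
Proof.
  intros Hw.
  assert (H1 := IG_inv (fun t => ln t * Ki w t) (Aw w) w Hw).
  assert (H2 : IG (fun u => w / u ^ 2 * (ln (w / u) * Ki w (w / u))) (Aw w)).
  { apply H1. intros x Hx. apply (ex_derive_continuous (fun t => ln t * Ki w t)). unfold Ki. auto_derive.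
    repeat split; lra. apply Aw_IG; lra. }
  assert (H3 : IG (fun u => w / u ^ 2 * (ln (w / u) * Ki w (w / u))) (ln w * (1 - FG w) - Bw w)).
  { apply (IG_ext (fun u => ln w * (w / u ^ 2 * Ki w u) - ln u * (w / u ^ 2 * Ki w u))).
    - intros u Hu.
      replace (ln (w / u)) with (ln w - ln u)
        by (unfold Rdiv; rewrite ln_mult, ln_Rinv by (try apply Rinv_0_lt_compat; lra); ring).
      unfold Ki. replace (w / (w / u)) with u by (field; lra). ring.
    - apply IG_minus. apply IG_scal, wK_IG; auto. apply Bw_IG; auto. }
  apply (IG_unique _ _ _ H2 H3).
Qed.

Lemma J_formula w : 0 < w -> FJ w = 2 * Aw w - ln w * (1 - FG w).
Proof. intros Hw. pose proof (J_AB w Hw). pose proof (Aw_inv w Hw). lra. Qed.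

Lemma ome_bound x : 0 < x -> 1 - exp (- x) <= Rpower x (/ 2).
Proof.
  intros Hx. destruct (Rle_dec x 1) as [H|H].
  - pose proof (exp_ineq1_le (- x)).
    assert (x <= Rpower x (/ 2)).
    { rewrite <- (Rpower_1 x) at 1 by auto. unfold Rpower. apply exp_le_exp.
      assert (ln x <= 0) by (rewrite <- ln_1; destruct (Rle_lt_or_eq_dec x 1 H); [left; apply ln_increasing; lra| subst; lra]).
      lra. }
    lra.
  - assert (1 <= Rpower x (/ 2)).
    { unfold Rpower. rewrite <- exp_0. apply exp_le_exp. 
      assert (0 < ln x) by (rewrite <- ln_1; apply ln_increasing; lra). lra. }
    pose proof (exp_pos (- x)). lra.
Qed.

Lemma rpow_div w t y : 0 < w -> 0 < t -> Rpower (w / t) y = Rpower w y * Rpower t (- y).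
Proof.
  intros Hw Ht. unfold Rpower. rewrite <- exp_plus. f_equal.
  unfold Rdiv. rewrite ln_mult, ln_Rinv by (try apply Rinv_0_lt_compat; lra). ring.
Qed.

Lemma rpow_mul t a b : Rpower t a * Rpower t b = Rpower t (a + b).
Proof. rewrite Rpower_plus; auto. Qed.

Lemma FG_bound w : 0 < w -> 0 <= FG w <= Rpower w (/ 2) * Gamma_fun (/ 2).
Proof.
  intros Hw. split.
  - apply (IG_le (fun _ => 0) (Gi w)); [| apply IG_zero | apply Gi_IG; lra].
    intros x Hx. unfold Gi. pose proof (exp_neg_le1 (w / x) ltac:(apply Rdiv_le_0_compat; lra)).
    pose proof (exp_pos (- x)). nra.
  - apply (IG_le (Gi w) (fun t => Rpower w (/ 2) * gint (/ 2) t)); [| apply Gi_IG; lra | apply IG_scal, Gamma_IG; lra].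
    intros x Hx. unfold Gi, gint. pose proof (ome_bound (w / x) ltac:(apply Rdiv_lt_0_compat; lra)).
    rewrite rpow_div in H by auto. replace (/ 2 - 1) with (- / 2) by field.
    pose proof (exp_pos (- x)). apply (Rmult_le_compat_l (exp (- x))) in H; lra.
Qed.

Definition C1 := RInt_gen (fun t => 4 * gint (/ 4) t + gint (3 / 2) t) (at_right 0) (Rbar_locally p_infty).

Lemma Aw_L1 w : 0 < w -> Rabs (Aw w - L1) <= Rpower w (/ 2) * C1.
Proof.
  intros Hw.
  apply (IG_norm (fun t => ln t * Ki w t - ln t * gint 1 t) (fun t => Rpower w (/ 2) * (4 * gint (/ 4) t + gint (3 / 2) t))).
  - intros t Ht.
    replace (ln t * Ki w t - ln t * gint 1 t) with (- (ln t * exp (- t)) * (1 - exp (- (w / t)))).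
    2: { unfold Ki, gint. replace (1 - 1) with 0 by ring. rewrite Rpower_O by auto. ring. }
    pose proof (ome_bound (w / t) ltac:(apply Rdiv_lt_0_compat; lra)) as H1.
    rewrite rpow_div in H1 by auto.
    pose proof (exp_neg_le1 (w / t) ltac:(apply Rdiv_le_0_compat; lra)).
    rewrite Rabs_mult, Rabs_Ropp, Rabs_mult, (Rabs_right (exp (- t))), (Rabs_right (1 - _)) by (apply Rle_ge; first [apply Rlt_le, exp_pos|lra]).
    pose proof (abs_ln_bound (/ 4) t ltac:(lra) Ht) as H2. rewrite Rinv_inv in H2.
    unfold gint. replace (/ 4 - 1) with (- / 4 + - / 2) by field. replace (3 / 2 - 1) with (1 + - / 2) by field.
    rewrite <- !rpow_mul, Rpower_1 by auto.
    pose proof (exp_pos (- t)). pose proof (Rabs_pos (ln t)). pose proof (Rpower_pos w (/2)).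
    pose proof (Rpower_pos t (- / 2)).
    assert (Rabs (ln t) * exp (- t) * (1 - exp (- (w / t))) <= (4 * Rpower t (- / 4) + t) * exp (- t) * (Rpower w (/ 2) * Rpower t (- / 2))).
    { apply Rmult_le_compat. apply Rmult_le_pos; lra. lra. apply Rmult_le_compat_r; lra. lra. }
    replace (Rpower w (/ 2) * (4 * (Rpower t (- / 4) * Rpower t (- / 2) * exp (- t)) + t * Rpower t (- / 2) * exp (- t)))
      with ((4 * Rpower t (- / 4) + t) * exp (- t) * (Rpower w (/ 2) * Rpower t (- / 2))) by ring.
    auto.
  - apply IG_minus. apply Aw_IG; lra. apply L1_IG.
  - apply IG_scal. apply Integ_IG. apply Integ_plus. apply Integ_scal, gint_Integ; lra. apply gint_Integ; lra.
Qed.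

Lemma lim_sqrt_like : filterlim (fun w => Rpower w (/ 2)) (at_right 0) (locally 0).
Proof. apply lim_rpow0; lra. Qed.

Lemma lnw_bound w : 0 < w -> w < 1 -> Rabs (ln w) * Rpower w (/ 2) <= 4 * Rpower w (/ 4) + Rpower w (/ 2).
Proof.
  intros Hw Hw1. pose proof (abs_ln_bound (/ 4) w ltac:(lra) Hw) as H. rewrite Rinv_inv in H.
  pose proof (Rpower_pos w (/ 2)).
  apply (Rmult_le_compat_r (Rpower w (/ 2))) in H; [|lra].
  replace ((4 * Rpower w (- / 4) + w) * Rpower w (/ 2)) with (4 * (Rpower w (- / 4) * Rpower w (/ 2)) + w * Rpower w (/ 2)) in H by ring.
  rewrite rpow_mul in H. replace (- / 4 + / 2) with (/ 4) in H by field.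
  assert (w * Rpower w (/ 2) <= Rpower w (/ 2)) by (pose proof (Rmult_le_compat_r (Rpower w (/ 2)) w 1 ltac:(lra) ltac:(lra)); lra).
  lra.
Qed.

Lemma lim_lnw_sqrt : filterlim (fun w => Rabs (ln w) * Rpower w (/ 2)) (at_right 0) (locally 0).
Proof.
  apply (lim0_squeeze _ _ (fun w => 4 * Rpower w (/ 4) + Rpower w (/ 2))).
  - generalize (F0_ev 1 Rlt_0_1). apply filter_imp. intros w Hw.
    rewrite Rabs_right by (apply Rle_ge, Rmult_le_pos; [apply Rabs_pos|apply Rlt_le, Rpower_pos]).
    apply lnw_bound; lra.
  - apply lim_plus0. apply lim_mulc0, lim_rpow0; lra. apply lim_rpow0; lra.
Qed.

Lemma lim_FG : filterlim FG (at_right 0) (locally 0).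
Proof.
  apply (lim0_squeeze _ _ (fun w => Gamma_fun (/ 2) * Rpower w (/ 2))).
  - generalize (F0_ev 1 Rlt_0_1). apply filter_imp. intros w Hw. 
    destruct (FG_bound w (proj1 Hw)). rewrite Rabs_right by lra. lra.
  - apply lim_mulc0, lim_rpow0; lra.
Qed.

Lemma lim_lnFG : filterlim (fun w => ln w * FG w) (at_right 0) (locally 0).
Proof.
  apply (lim0_squeeze _ _ (fun w => Gamma_fun (/ 2) * (Rabs (ln w) * Rpower w (/ 2)))).
  - generalize (F0_ev 1 Rlt_0_1). apply filter_imp. intros w Hw. 
    destruct (FG_bound w (proj1 Hw)). rewrite Rabs_mult, (Rabs_right (FG w)) by lra.
    pose proof (Rabs_pos (ln w)).
    apply Rle_trans with (Rabs (ln w) * (Rpower w (/ 2) * Gamma_fun (/ 2))).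
    apply Rmult_le_compat_l; lra. lra.
  - apply lim_mulc0, lim_lnw_sqrt.
Qed.

Lemma lim_wlnw : filterlim (fun w => w * ln w) (at_right 0) (locally 0).
Proof.
  apply (lim0_squeeze _ _ (fun w => Rabs (ln w) * Rpower w (/ 2))).
  - generalize (F0_ev 1 Rlt_0_1). apply filter_imp. intros w Hw.
    rewrite Rabs_mult, (Rabs_right w) by lra. rewrite Rmult_comm.
    apply Rmult_le_compat_l. apply Rabs_pos.
    rewrite <- (Rpower_1 w) at 1 by lra. unfold Rpower. apply exp_le_exp.
    assert (ln w < 0) by (rewrite <- ln_1; apply ln_increasing; lra). lra.
  - apply lim_lnw_sqrt.
Qed.

Lemma lim_Aw : filterlim (fun w => Aw w - L1) (at_right 0) (locally 0).
Proof.
  apply (lim0_squeeze _ _ (fun w => C1 * Rpower w (/ 2))).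
  - generalize (F0_ev 1 Rlt_0_1). apply filter_imp. intros w Hw. 
    pose proof (Aw_L1 w (proj1 Hw)). lra.
  - apply lim_mulc0, lim_rpow0; lra.
Qed.

Definition cc := 1 + 2 * L1.
Definition Ef z := FG z - z * (cc - ln z).

Lemma Ef_deriv z : 0 < z -> is_derive Ef z (2 * (Aw z - L1) + ln z * FG z).
Proof.
  intros Hz.
  apply (is_derive_eq (fun z => FG z - z * (cc - ln z)) Ef z (FJ z - (1 * (cc - ln z) + z * (- / z)))).
  reflexivity.
  rewrite J_formula by auto. unfold cc. field. lra.
  apply (is_derive_minus FG (fun z => z * (cc - ln z))). apply FG_deriv; auto.
  auto_derive. auto. ring.
Qed.

Lemma lim_Ef : filterlim Ef (at_right 0) (locally 0).
Proof.
  unfold Ef. apply (lim_ext (fun z => FG z + (- cc * z + z * ln z)) _ 0).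
  apply filter_forall; intros; ring. ring.
  apply lim_plus0. apply lim_FG. apply lim_plus0. apply lim_mulc0, lim_id0. apply lim_wlnw.
Qed.

Lemma lim_Efd : filterlim (fun z => 2 * (Aw z - L1) + ln z * FG z) (at_right 0) (locally 0).
Proof. apply lim_plus0. apply lim_mulc0, lim_Aw. apply lim_lnFG. Qed.

Lemma at_right_ev (P : R -> Prop) z : 0 < z -> at_right 0 P -> exists y, 0 < y < z /\ P y.
Proof.
  intros Hz [d Hd]. exists (Rmin d z / 2).
  assert (0 < Rmin d z) by (apply Rmin_glb_lt; [apply cond_pos|auto]).
  pose proof (Rmin_l d z). pose proof (Rmin_r d z).
  split. lra. apply Hd. apply ballR2. change (Rabs (Rmin d z / 2 - 0) < d).
  rewrite Rminus_0_r, Rabs_right by lra. lra. lra.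
Qed.

Lemma small_o (E E' : R -> R) : (forall z, 0 < z -> is_derive E z (E' z)) ->
  filterlim E (at_right 0) (locally 0) -> filterlim E' (at_right 0) (locally 0) ->
  filterlim (fun z => E z / z) (at_right 0) (locally 0).
Proof.
  intros HD HE HE'. apply filterlim_locally. intros eps.
  assert (He : 0 < eps / 2) by (destruct eps; simpl; lra).
  pose proof (proj1 (filterlim_locally _ _) HE' (mkposreal _ He)) as [d Hd].
  assert (Hd0 := cond_pos d).
  assert (Key : forall w, 0 < w < d -> Rabs (E' w) < eps / 2).
  { intros w Hw. specialize (Hd w). apply ballR1 in Hd. simpl in Hd.
    change (Rabs (E' w - 0) < eps / 2) in Hd. rewrite Rminus_0_r in Hd. auto.
    apply ballR2. change (Rabs (w - 0) < d). rewrite Rminus_0_r, Rabs_right; lra. lra. }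
  generalize (F0_ev (d / 2) ltac:(lra)). apply filter_imp. intros z Hz.
  apply ballR2. change (Rabs (E z / z - 0) < eps). rewrite Rminus_0_r.
  assert (Hb : Rabs (E z) <= eps / 2 * z).
  { apply Rnot_lt_le. intros Hcon.
    set (eta := Rabs (E z) - eps / 2 * z).
    assert (Heta : 0 < eta) by (unfold eta; lra).
    pose proof (proj1 (filterlim_locally _ _) HE (mkposreal _ Heta)) as HE2.
    destruct (at_right_ev _ z (proj1 Hz) HE2) as [y0 [Hy0 Hy1]].
    apply ballR1 in Hy1. simpl in Hy1. change (Rabs (E y0 - 0) < eta) in Hy1. rewrite Rminus_0_r in Hy1.
    destruct (MVT_cor4 E E' z (z - y0)) with (b := y0) as [c [Hc1 Hc2]].
    { intros c Hc. apply HD. apply (proj1 (Rabs_le_between' _ _ _)) in Hc. lra. }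
    { rewrite Rabs_left by lra. lra. }
    rewrite (Rabs_left (y0 - z)) in Hc2 by lra. apply (proj1 (Rabs_le_between' _ _ _)) in Hc2.
    assert (Rabs (E' c) < eps / 2) by (apply Key; lra).
    assert (Rabs (E y0 - E z) <= eps / 2 * (z - y0)).
    { rewrite Hc1, Rabs_mult. rewrite (Rabs_left (y0 - z)) by lra.
      replace (- (y0 - z)) with (z - y0) by ring. apply Rmult_le_compat_r; lra. }
    assert (Rabs (E z) <= Rabs (E y0) + Rabs (E y0 - E z)).
    { replace (E z) with (E y0 - (E y0 - E z)) at 1 by ring.
      eapply Rle_trans. apply Rabs_triang. rewrite Rabs_Ropp. lra. }
    unfold eta in Hy1. nra. }
  unfold Rdiv. rewrite Rabs_mult, Rabs_inv, (Rabs_right z) by lra.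
  apply (Rmult_lt_reg_r z). lra. rewrite Rmult_assoc, Rinv_l, Rmult_1_r by lra.
  destruct eps as [e Hep]. simpl in *. nra.
Qed.

Lemma Ef_o : filterlim (fun z => Ef z / z) (at_right 0) (locally 0).
Proof.
  apply (small_o Ef (fun z => 2 * (Aw z - L1) + ln z * FG z)).
  apply Ef_deriv. apply lim_Ef. apply lim_Efd.
Qed.

Lemma moment2 k : 0 < k -> IG (fun y => y ^ 2 * gamma_pdf k y) ((k + 1) / k).
Proof.
  intros Hk.
  assert (G2 : Gamma_fun (k + 2) = (k + 1) * k * Gamma_fun k).
  { replace (k + 2) with ((k + 1) + 1) by ring. rewrite Gamma_succ by lra. rewrite Gamma_succ by lra. ring. }
  pose proof (Gamma_pos k Hk) as Gp.
  assert (H1 : IG (fun y => gint (k + 2) (k * y)) (Gamma_fun (k + 2) / k)).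
  { apply IG_scale; auto. apply Gamma_IG; lra. }
  assert (H2 : IG (fun y => Rpower k k / Gamma_fun k * / Rpower k (k + 1) * gint (k + 2) (k * y))
                 (Rpower k k / Gamma_fun k * / Rpower k (k + 1) * (Gamma_fun (k + 2) / k))).
  { apply IG_scal; auto. }
  assert (E1 : Rpower k (k + 1) = Rpower k k * k) by (rewrite Rpower_plus, Rpower_1; auto).
  replace ((k + 1) / k) with (Rpower k k / Gamma_fun k * / Rpower k (k + 1) * (Gamma_fun (k + 2) / k)).
  2: { rewrite G2, E1. pose proof (Rpower_pos k k). field. repeat split; lra. }
  refine (IG_ext _ _ _ _ H2).
  intros y Hy. unfold gamma_pdf, gint.
  replace (k + 2 - 1) with (k + 1) by ring.
  rewrite <- (Rpower_mult_distr k y) by auto.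
  replace (Rpower y (k + 1)) with (Rpower y (k - 1) * y ^ 2).
  2: { replace (k + 1) with ((k - 1) + 2) by ring. rewrite Rpower_plus. f_equal.
       replace 2 with (INR 2) by (simpl; ring). rewrite Rpower_pow; auto. }
  pose proof (Rpower_pos k (k + 1)). field. lra.
Qed.

Lemma variance_val k m g : 0 < k -> 0 < m ->
  genK_variance k m g = g ^ 2 * ((k + 1) * (m + 1) / (k * m) - 1).
Proof.
  intros Hk Hm. unfold genK_variance.
  assert (Inner : forall x, RInt_gen (fun y => (g * x * y) ^ 2 * gamma_pdf k x * gamma_pdf m y)
                     (at_right 0) (Rbar_locally p_infty) = (g * x) ^ 2 * gamma_pdf k x * ((m + 1) / m)).
  { intros x. apply IG_RInt_gen.
    apply (IG_ext (fun y => ((g * x) ^ 2 * gamma_pdf k x) * (y ^ 2 * gamma_pdf m y))).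
    intros; ring. apply IG_scal, moment2; auto. }
  rewrite (IG_RInt_gen _ (g ^ 2 * ((m + 1) / m) * ((k + 1) / k))).
  field; lra.
  apply (IG_ext (fun x => g ^ 2 * ((m + 1) / m) * (x ^ 2 * gamma_pdf k x))).
  intros x _. rewrite Inner. ring.
  apply IG_scal, moment2; auto.
Qed.

Lemma cdf_eq gd y : genK11_cdf gd y = FG (y / gd).
Proof.
  unfold genK11_cdf, FG, Gi. f_equal. apply functional_extensionality. intros t.
  f_equal. f_equal. f_equal. f_equal. unfold Rdiv. rewrite Rinv_mult. ring.
Qed.

Lemma lim_comp_inv (f : R -> R) (a : R) : 0 < a -> filterlim f (at_right 0) (locally 0) ->
  filterlim (fun gd => f (a / gd)) (Rbar_locally p_infty) (locally 0).
Proof. intros Ha H. eapply filterlim_comp; [apply lim_inv_Fi; auto | exact H]. Qed.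

Theorem mainTheorem7 (Rs gbar_e ke me : R)
  (HRs : 0 < Rs) (Hge : 0 < gbar_e) (Hke : 0 < ke) (Hme : 0 < me) :
  let lam := Rpower 2 Rs in
  let sigma2 := genK_variance ke me gbar_e in
  let a := lam - 1 + lam * gbar_e in
  let P := fun gd x => genK11_cdf gd (lam - 1 + lam * x) in
  let Ptilde := fun gd => P gd gbar_e + sigma2 / 2 * Derive_n (P gd) 2 gbar_e in
  let main := fun gd =>
    / gd * ((digamma 1 + digamma 2 - ln (a / gd)) / / a
            - gbar_e ^ 2 * lam ^ 2 * ((ke + 1) * (me + 1) / (ke * me) - 1) / (2 * a)) in
  is_lim (fun gd => (Ptilde gd - main gd) / / gd) p_infty 0.
Proof.
  intros lam sigma2 a P Ptilde main.
  assert (Hlam : 1 < lam).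
  { unfold lam. rewrite <- (Rpower_O 2) by lra. apply Rpower_lt; lra. }
  assert (Ha : 0 < a) by (unfold a; nra).
  set (Q := (ke + 1) * (me + 1) / (ke * me) - 1).
  assert (Hs : sigma2 = gbar_e ^ 2 * Q) by (unfold sigma2, Q; apply variance_val; auto).
  set (K := sigma2 * lam ^ 2 / (2 * a)).
  assert (Hpos : forall gd x, 0 < gd -> 0 < x -> 0 < (lam - 1 + lam * x) / gd).
  { intros gd x Hgd Hx. apply Rdiv_lt_0_compat; nra. }
  assert (D1 : forall gd x, 0 < gd -> 0 < x ->
     is_derive (P gd) x (lam / gd * FJ ((lam - 1 + lam * x) / gd))).
  { intros gd x Hgd Hx.
    apply (is_derive_ext (fun x => FG ((lam - 1 + lam * x) / gd))).
    intros t; unfold P; rewrite cdf_eq; auto.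
    apply (is_derive_comp FG (fun x => (lam - 1 + lam * x) / gd) x).
    apply FG_deriv; auto. auto_derive. lra. field. lra. }
  assert (D2 : forall gd, 0 < gd ->
     Derive_n (P gd) 2 gbar_e = lam / gd * (lam / gd * FJ2 (a / gd))).
  { intros gd Hgd.
    change (Derive_n (P gd) 2 gbar_e) with (Derive (fun x => Derive (P gd) x) gbar_e).
    rewrite (Derive_ext_loc _ (fun x => lam / gd * FJ ((lam - 1 + lam * x) / gd))).
    - apply is_derive_unique.
      apply (is_derive_scal (fun x => FJ ((lam - 1 + lam * x) / gd))).
      apply (is_derive_ext (fun x => FJ ((lam - 1 + lam * x) / gd))). auto.
      apply (is_derive_eq (fun x => FJ ((lam - 1 + lam * x) / gd)) _ gbar_e (scal (lam / gd) (FJ2 ((lam - 1 + lam * gbar_e) / gd)))).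
      auto. unfold scal; simpl; unfold mult; simpl. unfold a. ring.
      apply (is_derive_comp FJ (fun x => (lam - 1 + lam * x) / gd) gbar_e).
      apply FJ_deriv. apply Hpos; auto. auto_derive. lra. field. lra.
    - exists (mkposreal _ Hge). intros y Hy. apply ballR1 in Hy. simpl in Hy.
      apply Rabs_def2 in Hy. apply is_derive_unique. apply D1; auto. lra. }
  change (filterlim (fun gd => (Ptilde gd - main gd) / / gd) (Rbar_locally p_infty) (locally 0)).
  apply (lim_ext (fun gd => a * (Ef (a / gd) / (a / gd)) + K * FG (a / gd)) _ 0 0).
  - exists 0. intros gd Hgd.
    unfold Ptilde, main. rewrite D2 by auto. unfold P. rewrite cdf_eq. fold a.
    rewrite digamma_sum. fold cc.
    assert (Hz : 0 < a / gd) by (apply Rdiv_lt_0_compat; lra).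
    pose proof (zJ2 (a / gd) Hz) as HJ.
    assert (EJ : FJ2 (a / gd) = - (1 - FG (a / gd)) / (a / gd)).
    { apply (Rmult_eq_reg_l (a / gd)); [|lra]. rewrite HJ. field. lra. }
    rewrite EJ. unfold Ef, K. rewrite Hs. fold Q. field. lra.
  - reflexivity.
  - apply lim_plus0; apply lim_mulc0.
    apply (lim_comp_inv (fun z => Ef z / z) a Ha). apply Ef_o.
    apply (lim_comp_inv FG a Ha). apply lim_FG.
Qed.
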